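(* Let $a<b$, $\alpha\in(0,1)$, fix $n\in\mathbb{N}$ and let $x\in C^n[a,b]$. Then, for $t\in(a,b]$, \begin{multline*} {_aD_t^\alpha} x(t)=\frac{1}{\Gamma(1-\alpha)}(t-a)^{-\alpha}x(t)+\sum_{i=1}^{n-1}A(\alpha,i)(t-a)^{i-\alpha}x^{(i)}(t)\\ +\sum_{p=n}^{\infty}\left[\frac{-\Gamma(p-n+1+\alpha)}{\Gamma(-\alpha)\Gamma(1+\alpha)(p-n+1)!}(t-a)^{-\alpha}x(t)+ B(\alpha,p)(t-a)^{n-1-p-\alpha}V_p(t)\right], \end{multline*} where \[ A(\alpha,i)=\frac{1}{\Gamma(i+1-\alpha)}\left[1+\sum_{p=n-i}^{\infty}\frac{\Gamma(p-n+1+\alpha)}{\Gamma(\alpha-i)(p-n+i+1)!}\right],\quad i=1,\ldots,n-1, \] \[ B(\alpha,p)=\frac{\Gamma(p-n+1+\alpha)}{\Gamma(-\alpha)\Gamma(1+\alpha)(p-n+1)!},\qquad V_p(t)=(p-n+1)\int_a^t (\tau-a)^{p-n}x(\tau)\,d\tau . \]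
   Context: For $\alpha\in(0,1)$ and a function $x$ on $[a,b]$, the left Riemann--Liouville fractional derivative is ${_aD_t^\alpha} x(t)=\frac{1}{\Gamma(1-\alpha)}\frac{d}{dt}\int_a^t (t-\tau)^{-\alpha}x(\tau)\,d\tau$. $\Gamma$ denotes Euler's gamma function. *)

(* Defs.v *)
From Stdlib Require Import Reals Factorial.
From Coquelicot Require Import Coquelicot.
Open Scope R_scope.

Fixpoint gauss_prod (z : R) (m : nat) : R :=
  match m with
  | O => z
  | S k => gauss_prod z k * (z + INR (S k))
  end.

(* Euler's Gamma function on R \ {0,-1,-2,...}, via Gauss' limit formula
   Gamma z = lim_m  m! m^z / (z (z+1) ... (z+m)). *)
Definition Gamma (z : R) : R :=
  real (Lim_seq (fun m => INR (fact m) * Rpower (INR m) z / gauss_prod z m)).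

Definition deriv_in (a b : R) (f : R -> R) (s l : R) : Prop :=
  filterlim (fun h => (f (s + h) - f s) / h)
    (within (fun h => h <> 0 /\ a <= s + h <= b) (locally 0)) (locally l).

Definition cont_in (a b : R) (f : R -> R) (s : R) : Prop :=
  filterlim f (within (fun u => a <= u <= b) (locally s)) (locally (f s)).

(* d is the family of derivatives x = d 0, d 1, ..., d n of a function
   x in C^n[a,b]: each d k (k <= n) is continuous on [a,b] and
   d (k+1) is the derivative of d k on [a,b] for k < n. *)
Definition Cn_derivs (a b : R) (n : nat) (x : R -> R) (d : nat -> R -> R) : Prop :=
  (forall s, a <= s <= b -> d O s = x s) /\
  (forall k s, (k < n)%nat -> a <= s <= b -> deriv_in a b (d k) s (d (S k) s)) /\
  (forall k s, (k <= n)%nat -> a <= s <= b -> cont_in a b (d k) s).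

Definition is_Cn (a b : R) (n : nat) (x : R -> R) : Prop :=
  exists d, Cn_derivs a b n x d.

Definition RL_integral (a alpha : R) (x : R -> R) (s : R) : R :=
  RInt_gen (fun tau => Rpower (s - tau) (- alpha) * x tau) (at_point a) (at_left s).

(* l is the left Riemann--Liouville derivative  aD_t^alpha x (t) on [a,b]:
   l = 1/Gamma(1-alpha) * d/dt int_a^t (t-tau)^(-alpha) x(tau) dtau *)
Definition is_RL_deriv (a b alpha : R) (x : R -> R) (t l : R) : Prop :=
  exists D, deriv_in a b (RL_integral a alpha x) t D /\ l = / Gamma (1 - alpha) * D.

(* A(alpha, i) : the series part, indexed by q = p - (n - i) >= 0 *)
Definition A_term (n : nat) (alpha : R) (i q : nat) : R :=
  let p := (q + (n - i))%nat in
  Gamma (INR p - INR n + 1 + alpha) / (Gamma (alpha - INR i) * INR (fact (p + i + 1 - n))).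

Definition A_coef (n : nat) (alpha : R) (i : nat) : R :=
  / Gamma (INR i + 1 - alpha) * (1 + Series (A_term n alpha i)).

Definition B_coef (n : nat) (alpha : R) (p : nat) : R :=
  Gamma (INR p - INR n + 1 + alpha) /
    (Gamma (- alpha) * Gamma (1 + alpha) * INR (fact (p - n + 1))).

Definition V_fun (a : R) (n : nat) (x : R -> R) (p : nat) (t : R) : R :=
  INR (p - n + 1) * RInt (fun tau => (tau - a) ^ (p - n) * x tau) a t.

(* the p-th term of the infinite series, indexed by k = p - n >= 0 *)
Definition main_term (a : R) (n : nat) (alpha : R) (x : R -> R) (t : R) (k : nat) : R :=
  let p := (k + n)%nat in
  - Gamma (INR p - INR n + 1 + alpha) /
      (Gamma (- alpha) * Gamma (1 + alpha) * INR (fact (p - n + 1)))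
    * Rpower (t - a) (- alpha) * x t
  + B_coef n alpha p * Rpower (t - a) (INR n - 1 - INR p - alpha) * V_fun a n x p t.

(* Main.v *)
Require Import Defs.
From Stdlib Require Import Reals Lra Lia Factorial.
From Coquelicot Require Import Coquelicot.
Open Scope R_scope.


Fixpoint poch (z : R) (m : nat) : R :=
  match m with O => 1 | S k => poch z k * (z + INR k) end.

Lemma gauss_poch z m : gauss_prod z m = poch z (S m).
Proof.
  induction m as [|m IH]; simpl gauss_prod.
  - simpl; ring.
  - rewrite IH; reflexivity.
Qed.

Lemma poch_shift z m : z * poch (z+1) m = poch z (S m).
Proof.
  induction m as [|m IH].
  - simpl; ring.
  - change (poch (z+1) (S m)) with (poch (z+1) m * (z + 1 + INR m)).
    change (poch z (S (S m))) with (poch z (S m) * (z + INR (S m))).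
    rewrite <- IH, S_INR; ring.
Qed.

Definition NI (z : R) := forall k : nat, z + INR k <> 0.

Lemma poch_nz z m : NI z -> poch z m <> 0.
Proof.
  intros H; induction m as [|m IH]; simpl.
  - lra.
  - apply Rmult_integral_contrapositive_currified; auto.
Qed.

Lemma NI_shift z m : NI z -> NI (z + INR m).
Proof. intros H k. rewrite Rplus_assoc, <- plus_INR. apply H. Qed.

Lemma NI_1 z : NI z -> NI (z + 1).
Proof. intros H. replace (z+1) with (z + INR 1) by (simpl; ring). apply NI_shift, H. Qed.

Lemma NI_nz z : NI z -> z <> 0.
Proof. intros H. specialize (H O). simpl in H. lra. Qed.

Definition gseq (z : R) (m : nat) : R :=
  INR (fact m) * Rpower (INR m) z / gauss_prod z m.

Lemma gseq_shift z m : NI z -> (0 < m)%nat ->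
  gseq (z+1) m = gseq z m * (z * INR m / (z + INR m + 1)).
Proof.
  intros Hz Hm. unfold gseq. rewrite !gauss_poch.
  assert (Hm' : 0 < INR m) by (apply lt_0_INR; lia).
  assert (Hz0 := NI_nz z Hz).
  assert (H1 := poch_nz z (S m) Hz).
  assert (H2 : z + INR m + 1 <> 0) by (rewrite Rplus_assoc; replace (INR m + 1) with (INR (S m)) by (rewrite S_INR; ring); apply Hz).
  assert (H3 : poch (z+1) (S m) = poch z (S m) * (z + INR m + 1) / z).
  { apply (Rmult_eq_reg_l z); [|exact Hz0]. rewrite poch_shift.
    change (poch z (S (S m))) with (poch z (S m) * (z + INR (S m))).
    rewrite S_INR. field. exact Hz0. }
  rewrite H3, Rpower_plus, Rpower_1 by exact Hm'.
  field. repeat split; auto; lra.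
Qed.

Lemma lim_inv_lin c : is_lim_seq (fun m => / (c + INR m)) 0.
Proof.
  assert (H : is_lim_seq (fun m => c + INR m) p_infty).
  { apply is_lim_seq_plus with c p_infty. apply is_lim_seq_const. apply is_lim_seq_INR.
    simpl. reflexivity. }
  apply (is_lim_seq_inv _ _ H). discriminate.
Qed.

Lemma lim_ratio z : is_lim_seq (fun m => z * INR m / (z + INR m + 1)) z.
Proof.
  apply is_lim_seq_ext_loc with (fun m => z - z * (z+1) * / ((z+1) + INR m)).
  - destruct (Rle_dec 0 (z+1)) as [Hp|Hn].
    + exists 1%nat. intros m Hm. assert (0 < INR m) by (apply lt_0_INR; lia).
      field. lra.
    + (* eventually z+1+m > 0 *)
      destruct (INR_unbounded (- (z+1))) as [N HN].
      exists (S N). intros m Hm. assert (INR N < INR m) by (apply lt_INR; lia).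
      field. lra.
  - assert (H := is_lim_seq_minus' _ _ z (z*(z+1)*0) (is_lim_seq_const z)
       (is_lim_seq_scal_l _ (z * (z+1)) 0 (lim_inv_lin (z+1)))).
    replace (z - z*(z+1)*0) with z in H by ring. exact H.
Qed.

Lemma lim_up z (L : R) : NI z -> is_lim_seq (gseq z) L -> is_lim_seq (gseq (z+1)) (z*L).
Proof.
  intros Hz HL.
  apply is_lim_seq_ext_loc with (fun m => gseq z m * (z * INR m / (z + INR m + 1))).
  - exists 1%nat. intros m Hm. symmetry. apply gseq_shift; auto; lia.
  - rewrite Rmult_comm. apply is_lim_seq_mult'; auto. apply lim_ratio.
Qed.

Lemma lim_down z (L : R) : NI z -> is_lim_seq (gseq (z+1)) L -> is_lim_seq (gseq z) (L/z).
Proof.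
  intros Hz HL. assert (Hz0 := NI_nz z Hz).
  apply is_lim_seq_ext_loc with (fun m => gseq (z+1) m / (z * INR m / (z + INR m + 1))).
  - exists 1%nat. intros m Hm. rewrite gseq_shift by (auto; lia).
    assert (0 < INR m) by (apply lt_0_INR; lia).
    assert (H2 : z + INR m + 1 <> 0) by (rewrite Rplus_assoc; replace (INR m + 1) with (INR (S m)) by (rewrite S_INR; ring); apply Hz).
    field. repeat split; auto; lra.
  - apply is_lim_seq_div'; auto. apply lim_ratio.
Qed.

Lemma lim_upn z (L : R) m : NI z -> is_lim_seq (gseq z) L -> is_lim_seq (gseq (z + INR m)) (L * poch z m).
Proof.
  intros Hz HL. induction m as [|m IH].
  - simpl. replace (z+0) with z by ring. replace (L*1) with L by ring. exact HL.
  - replace (z + INR (S m)) with ((z + INR m) + 1) by (rewrite S_INR; ring).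
    replace (L * poch z (S m)) with ((z + INR m) * (L * poch z m)) by (simpl; ring).
    apply lim_up; auto. apply NI_shift, Hz.
Qed.

Lemma lim_downn z (L : R) m : NI z -> is_lim_seq (gseq (z + INR m)) L -> is_lim_seq (gseq z) (L / poch z m).
Proof.
  intros Hz. revert L. induction m as [|m IH]; intros L HL.
  - simpl in *. replace (z+0) with z in HL by ring. replace (L/1) with L by field. exact HL.
  - replace (z + INR (S m)) with ((z + INR m) + 1) in HL by (rewrite S_INR; ring).
    apply lim_down in HL; [|apply NI_shift, Hz].
    apply IH in HL.
    replace (L / poch z (S m)) with (L / (z + INR m) / poch z m).
    exact HL. simpl. field. split. apply Hz. apply poch_nz, Hz.
Qed.

Lemma Gamma_of z (L : R) : is_lim_seq (gseq z) L -> Gamma z = L.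
Proof.
  intros H. unfold Gamma. fold (gseq z).
  change (fun m => INR (fact m) * Rpower (INR m) z / gauss_prod z m) with (gseq z).
  rewrite (is_lim_seq_unique _ _ H). reflexivity.
Qed.


Lemma ln_le_sub1 x : 0 < x -> ln x <= x - 1.
Proof. intros H. assert (H1 := exp_ineq1_le (ln x)). rewrite exp_ln in H1 by exact H. lra. Qed.

Lemma is_derive_Rpower_shift (c e v : R) : 0 < c + v ->
  is_derive (fun v => Rpower (c + v) e) v (e * Rpower (c + v) (e - 1)).
Proof.
  intros H. apply is_derive_Reals.
  replace (e * Rpower (c+v) (e-1)) with ((e * Rpower (c+v) (e-1)) * 1) by ring.
  apply (derivable_pt_lim_comp (fun v => c + v) (fun w => Rpower w e)).
  - replace 1 with (0 + 1) by ring. apply derivable_pt_lim_plus.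
    apply derivable_pt_lim_const. apply derivable_pt_lim_id.
  - apply derivable_pt_lim_power. exact H.
Qed.

Lemma Rpower_1_base z : Rpower 1 z = 1.
Proof. unfold Rpower. rewrite ln_1, Rmult_0_r, exp_0. reflexivity. Qed.

Lemma Rpower_pos x z : 0 < Rpower x z.
Proof. unfold Rpower. apply exp_pos. Qed.

Lemma bernoulli u z : 0 <= u -> 0 <= z <= 1 -> Rpower (1+u) z <= 1 + z*u.
Proof.
  intros Hu Hz. destruct (Req_dec u 0) as [->|Hu0].
  { rewrite Rplus_0_r, Rpower_1_base. lra. }
  set (f := fun v => 1 + z*v - Rpower (1+v) z).
  assert (Hd : forall v, 0 <= v -> is_derive f v (z - z * Rpower (1+v) (z-1))).
  { intros v Hv. unfold f. apply (is_derive_minus (fun v => 1 + z*v) (fun v => Rpower (1+v) z)).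
    - auto_derive; auto. ring.
    - apply is_derive_Rpower_shift. lra. }
  destruct (MVT_gen f 0 u (fun v => z - z * Rpower (1+v) (z-1))) as [c [Hc Heq]].
  - intros v Hv. rewrite Rmin_left, Rmax_right in Hv by lra. apply Hd. lra.
  - intros v Hv. rewrite Rmin_left, Rmax_right in Hv by lra.
    apply continuity_pt_filterlim. apply (ex_derive_continuous f). eexists. apply Hd. lra.
  - rewrite Rmin_left, Rmax_right in Hc by lra.
    assert (Hf0 : f 0 = 0) by (unfold f; rewrite Rplus_0_r, Rpower_1_base; ring).
    assert (Hp : Rpower (1+c) (z-1) <= 1).
    { assert (H0 : Rpower (1+c) (z-1) <= Rpower (1+c) 0) by (apply Rle_Rpower; lra).
      rewrite Rpower_O in H0 by lra. exact H0. }
    assert (0 <= f u).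
    { rewrite Hf0 in Heq. replace (f u) with ((z - z * Rpower (1 + c) (z - 1)) * (u - 0)) by lra.
      apply Rmult_le_pos; [|lra]. assert (0 <= z * (1 - Rpower (1+c) (z-1))) by (apply Rmult_le_pos; lra). lra. }
    unfold f in H. lra.
Qed.

Lemma poch_pos z m : 0 < z -> 0 < poch z m.
Proof.
  intros Hz. induction m; simpl. lra. apply Rmult_lt_0_compat; auto. assert (0 <= INR m) by apply pos_INR. lra.
Qed.

Lemma gseq_pos z m : 0 < z -> (0 < m)%nat -> 0 < gseq z m.
Proof.
  intros Hz Hm. unfold gseq. rewrite gauss_poch.
  apply Rdiv_lt_0_compat. apply Rmult_lt_0_compat. apply lt_0_INR, lt_O_fact. apply Rpower_pos.
  apply poch_pos, Hz.
Qed.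

Lemma Rpower_succ_split m z : (0 < m)%nat ->
  Rpower (INR (S m)) z = Rpower (INR m) z * Rpower (1 + / INR m) z.
Proof.
  intros Hm. assert (0 < INR m) by (apply lt_0_INR; lia).
  rewrite Rpower_mult_distr. f_equal. rewrite S_INR. field. lra. lra.
  assert (0 < / INR m) by (apply Rinv_0_lt_compat; lra). lra.
Qed.

Lemma gseq_S z m : 0 < z -> (0 < m)%nat ->
  gseq z (S m) = gseq z m * INR (S m) * Rpower (1 + / INR m) z / (z + INR (S m)).
Proof.
  intros Hz Hm. unfold gseq. rewrite !gauss_poch.
  rewrite (Rpower_succ_split m z Hm).
  change (poch z (S (S m))) with (poch z (S m) * (z + INR (S m))).
  rewrite fact_simpl, mult_INR.
  assert (0 < poch z (S m)) by (apply poch_pos; auto).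
  assert (0 < INR (S m)) by (apply lt_0_INR; lia).
  field. lra.
Qed.

Lemma gseq_incr z m : 0 < z -> (0 < m)%nat -> gseq z m <= gseq z (S m).
Proof.
  intros Hz Hm. rewrite gseq_S by auto.
  assert (Hg := gseq_pos z m Hz Hm).
  assert (HmR : 0 < INR m) by (apply lt_0_INR; lia).
  assert (HS : INR (S m) = INR m + 1) by apply S_INR.
  assert (Hq : 1 + z / (INR m + 1) <= Rpower (1 + / INR m) z).
  { unfold Rpower. eapply Rle_trans; [|apply exp_ineq1_le].
    apply Rplus_le_compat_l. unfold Rdiv. apply Rmult_le_compat_l. lra.
    assert (Hl : ln (/ (1 + / INR m)) <= / (1 + / INR m) - 1).
    { apply ln_le_sub1. apply Rinv_0_lt_compat. assert (0 < / INR m) by (apply Rinv_0_lt_compat; lra). lra. }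
    rewrite ln_Rinv in Hl by (assert (0 < / INR m) by (apply Rinv_0_lt_compat; lra); lra).
    replace (/ (1 + / INR m) - 1) with (- / (INR m + 1)) in Hl by (field; lra). lra. }
  rewrite HS. apply (Rmult_le_reg_r (z + (INR m + 1))). lra.
  unfold Rdiv. rewrite Rmult_assoc, Rinv_l, Rmult_1_r by lra.
  rewrite Rmult_assoc. rewrite Rmult_comm. rewrite (Rmult_comm (gseq z m)).
  apply Rmult_le_compat_r. lra.
  replace (z + (INR m + 1)) with ((INR m + 1) * (1 + z / (INR m + 1))) by (field; lra).
  apply Rmult_le_compat_l; lra.
Qed.

Lemma Rpower_le_poch z k : 0 <= z <= 1 ->
  Rpower (INR (S k)) z <= poch (z+1) k / INR (fact k).
Proof.
  intros Hz. induction k as [|k IH].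
  - simpl. rewrite Rpower_1_base. lra.
  - rewrite (Rpower_succ_split (S k) z) by lia.
    assert (HkR : 0 < INR (S k)) by (apply lt_0_INR; lia).
    assert (Hb := bernoulli (/ INR (S k)) z (Rlt_le _ _ (Rinv_0_lt_compat _ HkR)) Hz).
    change (poch (z+1) (S k)) with (poch (z+1) k * (z + 1 + INR k)).
    rewrite fact_simpl, mult_INR.
    replace (poch (z + 1) k * (z + 1 + INR k) / (INR (S k) * INR (fact k)))
      with ((poch (z+1) k / INR (fact k)) * (1 + z * / INR (S k))).
    2:{ rewrite S_INR. field. split. apply INR_fact_neq_0. rewrite S_INR in HkR. lra. }
    apply Rmult_le_compat; auto. left; apply Rpower_pos. left; apply Rpower_pos.
Qed.

Lemma gseq_bound z k : 0 < z <= 1 -> gseq z (S k) <= / z.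
Proof.
  intros Hz. unfold gseq. rewrite gauss_poch.
  rewrite <- poch_shift.
  change (poch (z+1) (S k)) with (poch (z+1) k * (z + 1 + INR k)).
  assert (H := Rpower_le_poch z k (conj (Rlt_le _ _ (proj1 Hz)) (proj2 Hz))).
  assert (Hp : 0 < poch (z+1) k) by (apply poch_pos; lra).
  assert (Hk := pos_INR k).
  assert (Hf : 0 < INR (fact k)) by (apply lt_0_INR, lt_O_fact).
  rewrite fact_simpl, mult_INR.
  apply Rle_trans with (INR (S k) * INR (fact k) * (poch (z + 1) k / INR (fact k)) / (z * (poch (z + 1) k * (z + 1 + INR k)))).
  - unfold Rdiv. apply Rmult_le_compat_r.
    + left. apply Rinv_0_lt_compat. apply Rmult_lt_0_compat. lra. apply Rmult_lt_0_compat; lra.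
    + apply Rmult_le_compat_l; [|exact H]. apply Rmult_le_pos; [apply pos_INR|lra].
  - rewrite S_INR. apply (Rmult_le_reg_r (z * (z + 1 + INR k))). apply Rmult_lt_0_compat; lra.
    replace ((INR k + 1) * INR (fact k) * (poch (z + 1) k / INR (fact k)) / (z * (poch (z + 1) k * (z + 1 + INR k))) * (z * (z + 1 + INR k)))
      with (INR k + 1) by (field; repeat split; lra).
    replace (/ z * (z * (z + 1 + INR k))) with (z + 1 + INR k) by (field; lra). lra.
Qed.

Lemma gamma_base z : 0 < z <= 1 -> exists L, 0 < L /\ is_lim_seq (gseq z) L.
Proof.
  intros Hz.
  assert (Hex : ex_finite_lim_seq (fun k => gseq z (S k))).
  { apply ex_finite_lim_seq_incr with (/ z).
    - intros k. apply gseq_incr; lia || lra.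
    - intros k. apply gseq_bound, Hz. }
  destruct Hex as [L HL].
  exists L. split.
  - assert (H0 : 0 < gseq z 1) by (apply gseq_pos; lia || lra).
    assert (Hle : Rbar_le (gseq z 1) L).
    { apply (is_lim_seq_le (fun _ => gseq z 1) (fun k => gseq z (S k))).
      - intros k. induction k. lra. eapply Rle_trans. exact IHk. apply gseq_incr; lia || lra.
      - apply is_lim_seq_const.
      - exact HL. }
    simpl in Hle. lra.
  - apply is_lim_seq_incr_1. exact HL.
Qed.


Lemma is_series_lim (a : nat -> R) (l : R) : is_lim_seq (sum_n a) l -> is_series a l.
Proof. intros H. exact H. Qed.

Lemma Rpower_lim0 e : e < 0 -> is_lim_seq (fun N => Rpower (INR N) e) 0.
Proof.
  intros He. unfold Rpower.
  apply (is_lim_comp_seq (fun y => exp (e * ln y)) INR p_infty 0).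
  - apply (is_lim_comp exp (fun y => e * ln y) p_infty 0 m_infty).
    + apply is_lim_exp_m.
    + replace m_infty with (Rbar_mult e p_infty).
      apply is_lim_scal_l, is_lim_ln_p.
      unfold Rbar_mult, Rbar_mult'. destruct (Rle_dec 0 e); [exfalso; lra|]. reflexivity.
    + exists 0. intros y _ . discriminate.
  - exists O. intros n _. discriminate.
  - apply is_lim_seq_INR.
Qed.

Ltac fixeq := match goal with |- @eq _ ?a ?b => change (@eq R a b) end.

Lemma sum_n_R (f : nat -> R) N : sum_n f (S N) = sum_n f N + f (S N).
Proof. rewrite sum_Sn. reflexivity. Qed.

Lemma sum_n_shift (f : nat -> R) N : sum_n (fun q => f (S q)) N = sum_n f (S N) - f O.
Proof.
  induction N as [|N IH].
  - rewrite sum_n_R, !sum_O. fixeq; ring.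
  - rewrite (sum_n_R (fun q => f (S q)) N), IH, (sum_n_R f (S N)). fixeq; ring.
Qed.

Lemma psum b N : sum_n (fun j => poch b j / INR (fact j)) N = poch (b+1) N / INR (fact N).
Proof.
  induction N as [|N IH].
  - rewrite sum_O. simpl. fixeq; field.
  - rewrite sum_n_R, IH. rewrite <- poch_shift.
    change (poch (b+1) (S N)) with (poch (b+1) N * (b + 1 + INR N)).
    rewrite fact_simpl, mult_INR, S_INR.
    assert (H := INR_fact_neq_0 N). assert (0 <= INR N) by apply pos_INR.
    fixeq; field. split; auto. lra.
Qed.

Lemma lim_lin_ratio w : NI w -> is_lim_seq (fun N => INR N / (w + INR N)) 1.
Proof.
  intros Hw.
  apply is_lim_seq_ext with (fun N => 1 - w * / (w + INR N)).
  - intros N. field. apply Hw.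
  - assert (H := is_lim_seq_minus' _ _ 1 (w*0) (is_lim_seq_const 1)
       (is_lim_seq_scal_l _ w 0 (lim_inv_lin w))).
    replace (1 - w*0) with 1 in H by ring. exact H.
Qed.

Lemma poch_fact_lim0 w (L : R) : w < 1 -> NI w -> is_lim_seq (gseq w) L -> L <> 0 ->
  is_lim_seq (fun N => poch w N / INR (fact N)) 0.
Proof.
  intros Hw1 Hw HL HL0.
  apply is_lim_seq_ext_loc with (fun N => Rpower (INR N) (w-1) * (INR N / (w + INR N)) / gseq w N).
  - exists 1%nat. intros N HN. unfold gseq. rewrite gauss_poch.
    change (poch w (S N)) with (poch w N * (w + INR N)).
    assert (HNR : 0 < INR N) by (apply lt_0_INR; lia).
    replace (Rpower (INR N) w) with (Rpower (INR N) (w-1) * INR N).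
    2:{ rewrite <- (Rpower_1 (INR N)) at 2 by lra. rewrite <- Rpower_plus. f_equal. ring. }
    assert (H1 := poch_nz w N Hw). assert (H2 := Hw N). assert (H3 := INR_fact_neq_0 N).
    assert (H4 := Rpower_pos (INR N) (w-1)).
    field. repeat split; auto; lra.
  - replace 0 with (0 * 1 / L) by (field; auto).
    apply is_lim_seq_div'; auto. apply is_lim_seq_mult'.
    apply Rpower_lim0; lra. apply lim_lin_ratio, Hw.
Qed.

Lemma NI_alpha_sub a i : 0 < a < 1 -> NI (a - INR i).
Proof.
  intros Ha k. destruct (Compare_dec.le_lt_dec i k) as [H|H].
  - apply le_INR in H. lra.
  - assert (H0 : INR (S k) <= INR i) by (apply le_INR; lia). rewrite S_INR in H0. lra.
Qed.

Lemma NI_alpha a : 0 < a < 1 -> NI a.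
Proof. intros Ha. assert (H := NI_alpha_sub a 0 Ha). simpl in H. intros k. specialize (H k). lra. Qed.

Lemma NI_1m a : 0 < a < 1 -> NI (1 - a).
Proof. intros Ha k. assert (0 <= INR k) by apply pos_INR. lra. Qed.

Lemma NI_m a : 0 < a < 1 -> NI (- a).
Proof.
  intros Ha k. destruct k. simpl. lra. rewrite S_INR. assert (0 <= INR k) by apply pos_INR. lra.
Qed.

Lemma lim_base_Gamma z : 0 < z <= 1 -> 0 < Gamma z /\ is_lim_seq (gseq z) (Gamma z).
Proof.
  intros Hz. destruct (gamma_base z Hz) as [L [HL HlL]].
  rewrite (Gamma_of z L HlL). auto.
Qed.

Lemma Gamma_1p a : 0 < a < 1 -> Gamma (1 + a) = a * Gamma a.
Proof.
  intros Ha. destruct (lim_base_Gamma a) as [_ H]. lra.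
  apply Gamma_of. rewrite Rplus_comm. apply lim_up; auto. apply NI_alpha, Ha.
Qed.

Lemma Gamma_m a : 0 < a < 1 -> Gamma (- a) = Gamma (1 - a) / (- a).
Proof.
  intros Ha. destruct (lim_base_Gamma (1-a)) as [_ H]. lra.
  apply Gamma_of. apply lim_down. apply NI_m, Ha.
  replace (-a + 1) with (1 - a) by ring. exact H.
Qed.

Lemma lim_sub a i : 0 < a < 1 ->
  is_lim_seq (gseq (a - INR i)) (Gamma a / poch (a - INR i) i).
Proof.
  intros Ha. destruct (lim_base_Gamma a) as [_ H]. lra.
  apply lim_downn. apply NI_alpha_sub, Ha.
  replace (a - INR i + INR i) with a by ring. exact H.
Qed.

Lemma Gamma_sub_add a i m : 0 < a < 1 ->
  Gamma (a - INR i + INR m) = Gamma a / poch (a - INR i) i * poch (a - INR i) m.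
Proof.
  intros Ha. apply Gamma_of. apply lim_upn. apply NI_alpha_sub, Ha. apply lim_sub, Ha.
Qed.

Lemma Gamma_sub a i : 0 < a < 1 -> Gamma (a - INR i) = Gamma a / poch (a - INR i) i.
Proof.
  intros Ha. apply Gamma_of. apply lim_sub, Ha.
Qed.

Lemma coef_lim0 a i : 0 < a < 1 -> (1 <= i)%nat ->
  is_lim_seq (fun N => poch (a - INR i + 1) N / INR (fact N)) 0.
Proof.
  intros Ha Hi.
  replace (a - INR i + 1) with (a - INR (i - 1)).
  2:{ rewrite minus_INR by lia. simpl. ring. }
  apply (poch_fact_lim0 _ (Gamma a / poch (a - INR (i-1)) (i-1))).
  - assert (0 <= INR (i-1)) by apply pos_INR. lra.
  - apply NI_alpha_sub, Ha.
  - apply lim_sub, Ha.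
  - destruct (lim_base_Gamma a) as [Hp _]. lra.
    assert (Hn := poch_nz _ (i-1) (NI_alpha_sub a (i-1) Ha)).
    unfold Rdiv. apply Rmult_integral_contrapositive_currified. lra. apply Rinv_neq_0_compat, Hn.
Qed.

Lemma A_term_eq n a i q : 0 < a < 1 -> (1 <= i <= n - 1)%nat ->
  A_term n a i q = poch (a - INR i) (S q) / INR (fact (S q)).
Proof.
  intros Ha Hi. unfold A_term.
  replace (INR (q + (n - i)) - INR n + 1 + a) with (a - INR i + INR (S q)).
  2:{ rewrite plus_INR, minus_INR by lia. rewrite S_INR. ring. }
  replace (q + (n - i) + i + 1 - n)%nat with (S q) by lia.
  rewrite Gamma_sub_add, Gamma_sub by exact Ha.
  destruct (lim_base_Gamma a) as [Hp _]. lra.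
  assert (Hn := poch_nz _ i (NI_alpha_sub a i Ha)).
  assert (Hf := INR_fact_neq_0 (S q)).
  field. repeat split; auto; lra.
Qed.

Lemma A_series n a i : 0 < a < 1 -> (1 <= i <= n - 1)%nat ->
  is_series (A_term n a i) (-1).
Proof.
  intros Ha Hi. apply is_series_lim.
  apply is_lim_seq_ext with (fun Q => poch (a - INR i + 1) (S Q) / INR (fact (S Q)) - 1).
  - intros Q. symmetry.
    transitivity (sum_n (fun q => (fun j => poch (a-INR i) j / INR (fact j)) (S q)) Q).
    + apply sum_n_ext. intros q. apply A_term_eq; auto.
    + rewrite (sum_n_shift (fun j => poch (a-INR i) j / INR (fact j)) Q), psum.
      replace (poch (a - INR i) 0 / INR (fact 0)) with 1 by (simpl; field). reflexivity.
  - replace (-1) with (0 - 1) by ring. apply is_lim_seq_minus'. 2: apply is_lim_seq_const.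
    apply (is_lim_seq_incr_1 (fun N => poch (a - INR i + 1) N / INR (fact N))).
    apply coef_lim0; auto; lia.
Qed.


Definition cc (a : R) (j : nat) : R := poch a j / INR (fact j).
Definition dd (a : R) (j : nat) : R := poch (a - 1) j / INR (fact j).

Lemma cc_pos a j : 0 < a -> 0 < cc a j.
Proof. intros Ha. unfold cc. apply Rdiv_lt_0_compat. apply poch_pos, Ha. apply lt_0_INR, lt_O_fact. Qed.

Lemma dd_S a j : dd a (S j) = (a - 1) * cc a j / INR (S j).
Proof.
  unfold dd, cc. rewrite <- poch_shift. replace (a - 1 + 1) with a by ring.
  rewrite fact_simpl, mult_INR. assert (H := INR_fact_neq_0 j).
  assert (0 < INR (S j)) by (apply lt_0_INR; lia). field. lra.
Qed.

Lemma dd_0 a : dd a 0 = 1.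
Proof. unfold dd. simpl. field. Qed.

Lemma cc_0 a : cc a 0 = 1.
Proof. unfold cc. simpl. field. Qed.

Lemma dd_neg a j : 0 < a < 1 -> dd a (S j) < 0.
Proof.
  intros Ha. rewrite dd_S. assert (H := cc_pos a j (proj1 Ha)).
  assert (0 < INR (S j)) by (apply lt_0_INR; lia).
  unfold Rdiv. assert (0 < / INR (S j)) by (apply Rinv_0_lt_compat; lra).
  assert (0 < (1-a) * cc a j * / INR (S j)).
  { apply Rmult_lt_0_compat. apply Rmult_lt_0_compat. lra. exact H. assumption. }
  replace ((a - 1) * cc a j * / INR (S j)) with (- ((1-a) * cc a j * / INR (S j))) by ring. lra.
Qed.

Lemma sum_dd a N : sum_n (dd a) N = cc a N.
Proof. unfold dd, cc. rewrite (psum (a-1)). replace (a - 1 + 1) with a by ring. reflexivity. Qed.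

Lemma cc_S a N : cc a (S N) = cc a N + dd a (S N).
Proof. rewrite <- !sum_dd. rewrite sum_n_R. reflexivity. Qed.

Lemma cc_lim0 a : 0 < a < 1 -> is_lim_seq (cc a) 0.
Proof.
  intros Ha. destruct (lim_base_Gamma a) as [Hp Hl]. lra.
  apply (poch_fact_lim0 a (Gamma a)); auto. lra. apply NI_alpha, Ha. lra.
Qed.

Lemma cc_le1 a N : 0 < a < 1 -> cc a N <= 1.
Proof.
  intros Ha. induction N. rewrite cc_0; lra.
  rewrite cc_S. assert (H := dd_neg a N Ha). lra.
Qed.

Lemma dd_rec a j : INR (S j) * dd a (S j) = dd a j * (a - 1 + INR j).
Proof.
  unfold dd. change (poch (a-1) (S j)) with (poch (a-1) j * (a - 1 + INR j)).
  rewrite fact_simpl, mult_INR. assert (H := INR_fact_neq_0 j).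
  assert (0 < INR (S j)) by (apply lt_0_INR; lia). field. lra.
Qed.

Definition Pn (a : R) (N : nat) (z : R) : R := sum_n (fun j => dd a j * z ^ j) N.
Definition Dn (a : R) (N : nat) (z : R) : R := sum_n (fun j => dd a j * (INR j * z ^ pred j)) N.

Lemma Pn_derive a N z : is_derive (Pn a N) z (Dn a N z).
Proof.
  unfold Pn, Dn. induction N as [|N IH].
  - apply (is_derive_ext (fun t => dd a 0 * t ^ 0)). intros t. rewrite sum_O. reflexivity.
    rewrite sum_O. auto_derive; auto. simpl. ring.
  - apply (is_derive_ext (fun t => sum_n (fun j => dd a j * t ^ j) N + dd a (S N) * t ^ (S N))).
    intros t. rewrite sum_n_R. reflexivity.
    rewrite sum_n_R. apply (is_derive_plus (fun t => sum_n (fun j => dd a j * t ^ j) N)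
      (fun t => dd a (S N) * t ^ S N)). exact IH.
    apply is_derive_scal. auto_derive; auto. simpl. ring.
Qed.

Lemma Pn_ode a N z : (1 - z) * Dn a N z + (1 - a) * Pn a N z = - (INR (S N) * dd a (S N)) * z ^ N.
Proof.
  unfold Pn, Dn. induction N as [|N IH].
  - rewrite !sum_O. rewrite dd_rec, dd_0. simpl. ring.
  - rewrite !sum_n_R.
    replace ((1 - z) * (sum_n (fun j => dd a j * (INR j * z ^ pred j)) N + dd a (S N) * (INR (S N) * z ^ pred (S N))) +
     (1 - a) * (sum_n (fun j => dd a j * z ^ j) N + dd a (S N) * z ^ S N))
      with (((1 - z) * sum_n (fun j => dd a j * (INR j * z ^ pred j)) N + (1 - a) * sum_n (fun j => dd a j * z ^ j) N)
            + (1 - z) * dd a (S N) * (INR (S N) * z ^ N) + (1 - a) * dd a (S N) * z ^ S N) by (simpl; ring).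
    rewrite IH. rewrite (dd_rec a (S N)). rewrite !S_INR. simpl. ring.
Qed.

Lemma Pn_0 a N : Pn a N 0 = 1.
Proof.
  unfold Pn. induction N. rewrite sum_O, dd_0. simpl. fixeq; ring.
  rewrite sum_n_R, IHN. simpl. fixeq; ring.
Qed.

Lemma Pn_1 a N : Pn a N 1 = cc a N.
Proof.
  rewrite <- sum_dd. unfold Pn. apply sum_n_ext. intros j. rewrite pow1. fixeq; ring.
Qed.

Lemma is_derive_Rpower_sub (c e z : R) : 0 < c - z ->
  is_derive (fun z => Rpower (c - z) e) z (- (e * Rpower (c - z) (e - 1))).
Proof.
  intros H. apply is_derive_Reals.
  replace (- (e * Rpower (c-z) (e-1))) with ((e * Rpower (c-z) (e-1)) * (-1)) by ring.
  apply (derivable_pt_lim_comp (fun z => c - z) (fun w => Rpower w e)).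
  - replace (-1) with (0 - 1) by ring. apply derivable_pt_lim_minus.
    apply derivable_pt_lim_const. apply derivable_pt_lim_id.
  - apply derivable_pt_lim_power. exact H.
Qed.

Lemma pow_le_1' x N : 0 <= x <= 1 -> x ^ N <= 1.
Proof.
  intros H. induction N; simpl. lra.
  assert (0 <= x ^ N) by (apply pow_le; lra).
  replace 1 with (1 * 1) by ring. apply Rmult_le_compat; lra.
Qed.

Lemma Rpower_m1 x e : 0 < x -> Rpower x (e - 1) * x = Rpower x e.
Proof.
  intros Hx. rewrite <- (Rpower_1 x) at 2 by exact Hx. rewrite <- Rpower_plus. f_equal. ring.
Qed.

Lemma kernel_mvt a N z : 0 < a < 1 -> 0 < z < 1 ->
  exists xi, 0 <= xi <= z /\
   Pn a N z * Rpower (1 - z) (- (1 - a)) - 1 =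
   Rpower (1 - xi) (- (1-a) - 1) * ((1 - a) * cc a N * xi ^ N) * z.
Proof.
  intros Ha Hz.
  set (psi := fun z => Pn a N z * Rpower (1 - z) (- (1 - a))).
  set (dpsi := fun z => Rpower (1 - z) (- (1-a) - 1) * ((1 - a) * cc a N * z ^ N)).
  assert (Hd : forall u, u < 1 -> is_derive psi u (dpsi u)).
  { intros u Hu. unfold psi, dpsi.
    eapply is_derive_ext. intros t. reflexivity.
    assert (H1 := Pn_derive a N u).
    assert (H2 := is_derive_Rpower_sub 1 (- (1 - a)) u ltac:(lra)).
    assert (H3 := is_derive_mult _ _ u _ _ H1 H2 Rmult_comm).
    replace (Rpower (1 - u) (- (1 - a) - 1) * ((1 - a) * cc a N * u ^ N))
      with (plus (mult (Dn a N u) (Rpower (1 - u) (- (1 - a))))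
                 (mult (Pn a N u) (- (- (1 - a) * Rpower (1 - u) (- (1 - a) - 1))))).
    exact H3.
    unfold plus, mult; simpl.
    rewrite <- (Rpower_m1 (1-u) (- (1-a))) by lra.
    assert (Ho := Pn_ode a N u). rewrite dd_S in Ho.
    assert (0 < INR (S N)) by (apply lt_0_INR; lia).
    replace (- (INR (S N) * ((a - 1) * cc a N / INR (S N)))) with ((1-a) * cc a N) in Ho by (field; lra).
    rewrite <- Ho. ring. }
  destruct (MVT_gen psi 0 z dpsi) as [xi [Hxi Heq]].
  - intros u Hu. rewrite Rmin_left, Rmax_right in Hu by lra. apply Hd. lra.
  - intros u Hu. rewrite Rmin_left, Rmax_right in Hu by lra.
    apply continuity_pt_filterlim. apply (ex_derive_continuous psi). eexists. apply Hd. lra.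
  - rewrite Rmin_left, Rmax_right in Hxi by lra.
    exists xi. split. exact Hxi.
    assert (Hp0 : psi 0 = 1).
    { unfold psi. rewrite Pn_0. replace (1 - 0) with 1 by ring. rewrite Rpower_1_base. ring. }
    replace (Pn a N z * Rpower (1 - z) (- (1 - a)) - 1) with (psi z - psi 0) by (rewrite Hp0; reflexivity).
    rewrite Heq. unfold dpsi. ring.
Qed.

Lemma Rpower_inv_mul x e : 0 < x -> Rpower x (- e) * Rpower x e = 1.
Proof. intros Hx. rewrite <- Rpower_plus. replace (- e + e) with 0 by ring. apply Rpower_O, Hx. Qed.

Lemma kernel_lower a N z : 0 < a < 1 -> 0 <= z < 1 -> Rpower (1 - z) (1 - a) <= Pn a N z.
Proof.
  intros Ha Hz. destruct (Req_dec z 0) as [->|Hz0].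
  { rewrite Pn_0. replace (1 - 0) with 1 by ring. rewrite Rpower_1_base. lra. }
  destruct (kernel_mvt a N z Ha ltac:(lra)) as [xi [Hxi Heq]].
  assert (Hn : 0 <= Rpower (1 - xi) (- (1-a) - 1) * ((1 - a) * cc a N * xi ^ N) * z).
  { assert (0 < cc a N) by (apply cc_pos; lra). assert (0 <= xi ^ N) by (apply pow_le; lra).
    assert (0 < Rpower (1 - xi) (- (1 - a) - 1)) by apply Rpower_pos.
    apply Rmult_le_pos; [|lra]. apply Rmult_le_pos; [lra|]. apply Rmult_le_pos; [|lra]. nra. }
  assert (Hg : 1 <= Pn a N z * Rpower (1 - z) (- (1 - a))) by lra.
  assert (Hr := Rpower_pos (1-z) (1-a)).
  apply Rmult_le_compat_r with (r := Rpower (1-z) (1-a)) in Hg; [|lra].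
  rewrite Rmult_assoc, Rpower_inv_mul in Hg by lra. lra.
Qed.

Lemma kernel_upper_M a N z : 0 < a < 1 -> 0 <= z < 1 ->
  Pn a N z - Rpower (1 - z) (1 - a) <= (1 - a) * cc a N / (1 - z).
Proof.
  intros Ha Hz. assert (Hc : 0 < cc a N) by (apply cc_pos; lra).
  destruct (Req_dec z 0) as [->|Hz0].
  { rewrite Pn_0. replace (1 - 0) with 1 by ring. rewrite Rpower_1_base.
    apply Rle_trans with 0. lra. apply Rdiv_le_0_compat; nra. }
  destruct (kernel_mvt a N z Ha ltac:(lra)) as [xi [Hxi Heq]].
  assert (HR : Rpower (1 - xi) (- (1-a) - 1) <= Rpower (1 - z) (- (1-a) - 1)).
  { replace (- (1-a) - 1) with (- (2 - a)) by ring. rewrite !Rpower_Ropp.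
    apply Rinv_le_contravar. apply Rpower_pos.
    apply Rle_Rpower_l; lra. }
  assert (Hx : xi ^ N <= 1) by (apply pow_le_1'; lra).
  assert (Hxp : 0 <= xi ^ N) by (apply pow_le; lra).
  assert (Hr := Rpower_pos (1-z) (1-a)).
  assert (Hq := Rpower_pos (1-xi) (- (1-a) - 1)).
  assert (Hm : Pn a N z - Rpower (1 - z) (1 - a) =
     Rpower (1 - z) (1 - a) * (Pn a N z * Rpower (1 - z) (- (1 - a)) - 1)).
  { rewrite Rmult_minus_distr_l, (Rmult_comm (Pn a N z)), <- Rmult_assoc, (Rmult_comm (Rpower (1 - z) (1 - a))),
      Rpower_inv_mul by lra. ring. }
  rewrite Hm, Heq.
  assert (Hk : Rpower (1 - z) (1 - a) * Rpower (1 - z) (- (1 - a) - 1) = / (1 - z)).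
  { rewrite <- Rpower_plus. replace (1 - a + (- (1 - a) - 1)) with (Ropp 1) by ring.
    rewrite Rpower_Ropp, Rpower_1 by lra. reflexivity. }
  apply Rle_trans with (Rpower (1 - z) (1 - a) * (Rpower (1 - z) (- (1 - a) - 1) * ((1 - a) * cc a N * 1) * 1)).
  - apply Rmult_le_compat_l; [lra|]. apply Rmult_le_compat; try lra.
    + apply Rmult_le_pos; [lra|]. apply Rmult_le_pos; [|lra]. apply Rmult_le_pos; lra.
    + apply Rmult_le_compat; try lra. apply Rmult_le_pos; [|lra]. apply Rmult_le_pos; lra.
      apply Rmult_le_compat_l; [|lra]. apply Rmult_le_pos; lra.
  - rewrite !Rmult_1_r. rewrite <- Rmult_assoc, Hk. unfold Rdiv. rewrite Rmult_comm. lra.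
Qed.

Lemma Pn_S a N z : Pn a (S N) z = Pn a N z + dd a (S N) * z ^ S N.
Proof. unfold Pn. rewrite sum_n_R. reflexivity. Qed.

Lemma Pn_tail a N k z : 0 < a < 1 -> 0 <= z <= 1 ->
  Pn a N z - Pn a (N + k) z <= cc a N - cc a (N + k).
Proof.
  intros Ha Hz. induction k as [|k IH].
  - rewrite Nat.add_0_r. lra.
  - rewrite Nat.add_succ_r, Pn_S, cc_S.
    assert (Hd := dd_neg a (N + k) Ha).
    assert (Hp : z ^ S (N + k) <= 1) by (apply pow_le_1'; lra).
    assert (Hp0 : 0 <= z ^ S (N + k)) by (apply pow_le; lra).
    assert (dd a (S (N + k)) <= dd a (S (N + k)) * z ^ S (N + k)) by nra.
    lra.
Qed.

Lemma kernel_bound a N z : 0 < a < 1 -> 0 <= z < 1 ->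
  0 <= Pn a N z - Rpower (1 - z) (1 - a) <= cc a N.
Proof.
  intros Ha Hz. split.
  - assert (H := kernel_lower a N z Ha Hz). lra.
  - destruct (Rle_dec (Pn a N z - Rpower (1 - z) (1 - a)) (cc a N)) as [H|H]; [exact H|].
    exfalso. apply Rnot_le_lt in H.
    set (eps := (Pn a N z - Rpower (1 - z) (1 - a) - cc a N) * (1 - z) / (1 - a)).
    assert (Heps : 0 < eps) by (unfold eps; apply Rdiv_lt_0_compat; [apply Rmult_lt_0_compat|]; lra).
    assert (Hl := cc_lim0 a Ha). apply is_lim_seq_Reals in Hl.
    destruct (Hl eps Heps) as [K HK].
    specialize (HK (N + K)%nat ltac:(lia)). unfold Rdist in HK. rewrite Rminus_0_r in HK.
    assert (Hc := cc_pos a (N+K) (proj1 Ha)). rewrite Rabs_right in HK by lra.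
    assert (H1 := Pn_tail a N K z Ha ltac:(lra)).
    assert (H2 := kernel_upper_M a (N + K) z Ha Hz).
    assert (H3 : (1 - a) * cc a (N + K) / (1 - z) < Pn a N z - Rpower (1 - z) (1 - a) - cc a N).
    { apply (Rmult_lt_reg_r (1 - z)). lra. unfold Rdiv. rewrite Rmult_assoc, Rinv_l, Rmult_1_r by lra.
      unfold eps in HK. apply (Rmult_lt_compat_l (1 - a)) in HK; [|lra].
      replace ((1 - a) * ((Pn a N z - Rpower (1 - z) (1 - a) - cc a N) * (1 - z) / (1 - a)))
        with ((Pn a N z - Rpower (1 - z) (1 - a) - cc a N) * (1 - z)) in HK by (field; lra). lra. }
    assert (Hc2 := cc_pos a N (proj1 Ha)).
    lra.
Qed.


Lemma ball_R (x : R) (e : R) (y : R) : ball x e y <-> Rabs (y - x) < e.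
Proof. unfold ball; simpl; unfold AbsRing_ball, abs, minus, plus, opp; simpl. tauto. Qed.
Lemma ball_R1 (x e y : R) : ball x e y -> Rabs (y - x) < e.
Proof. apply ball_R. Qed.
Lemma ball_R2 (x e y : R) : Rabs (y - x) < e -> ball x e y.
Proof. apply ball_R. Qed.

Lemma cont_in_eps a b f s : cont_in a b f s ->
  forall eps, 0 < eps -> exists del, 0 < del /\ forall u, a <= u <= b -> Rabs (u - s) < del -> Rabs (f u - f s) < eps.
Proof.
  intros H eps Heps. unfold cont_in in H.
  apply filterlim_locally with (eps := mkposreal eps Heps) in H.
  destruct H as [del Hd]. exists del. split. apply cond_pos.
  intros u Hu Hus. apply ball_R2. apply Hd. apply ball_R2. exact Hus. exact Hu.
Qed.

Lemma deriv_in_interior a b f s l : deriv_in a b f s l -> a < s < b -> derivable_pt_lim f s l.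
Proof.
  intros H Hs eps Heps. unfold deriv_in in H.
  apply filterlim_locally with (eps := mkposreal eps Heps) in H.
  destruct H as [del Hd].
  assert (Hp : 0 < Rmin del (Rmin (s - a) (b - s))).
  { apply Rmin_pos. apply cond_pos. apply Rmin_pos; lra. }
  exists (mkposreal _ Hp). intros h Hh0 Hh. simpl in Hh.
  assert (H1 := Rmin_l del (Rmin (s - a) (b - s))).
  assert (H2 := Rmin_r del (Rmin (s - a) (b - s))).
  assert (H3 := Rmin_l (s - a) (b - s)). assert (H4 := Rmin_r (s - a) (b - s)).
  apply ball_R2. apply Hd. apply ball_R2. rewrite Rminus_0_r. lra.
  split. exact Hh0. apply Rabs_lt_between in Hh. lra.
Qed.

Lemma deriv_in_of a b F G s l : derivable_pt_lim G s l ->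
  (exists del, 0 < del /\ forall u, a <= u <= b -> Rabs (u - s) < del -> F u = G u) ->
  a <= s <= b -> deriv_in a b F s l.
Proof.
  intros HG [del [Hdel HFG]] Hs. unfold deriv_in.
  apply filterlim_locally. intros eps.
  destruct (HG eps (cond_pos eps)) as [del' Hd'].
  assert (Hp : 0 < Rmin del del') by (apply Rmin_pos; [lra|apply cond_pos]).
  exists (mkposreal _ Hp). intros h Hh0 [Hh1 Hab]. change R in h. simpl in Hh0.
  assert (Hh : Rabs (h - 0) < Rmin del del') by (apply ball_R; exact Hh0).
  rewrite Rminus_0_r in Hh. clear Hh0. rename Hh1 into Hh0.
  assert (H1 := Rmin_l del del'). assert (H2 := Rmin_r del del').
  apply ball_R2. rewrite !HFG; auto.
  apply Hd'; auto. lra. rewrite Rminus_diag, Rabs_R0. lra.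
  replace (s + h - s) with h by ring. lra.
Qed.

Definition clamp (a b s : R) : R := Rmax a (Rmin b s).

Lemma clamp_in a b s : a <= b -> a <= clamp a b s <= b.
Proof. intros H. unfold clamp, Rmax, Rmin. repeat destruct Rle_dec; lra. Qed.

Lemma clamp_id a b s : a <= s <= b -> clamp a b s = s.
Proof. intros H. unfold clamp, Rmax, Rmin. repeat destruct Rle_dec; lra. Qed.

Lemma clamp_lip a b u v : a <= b -> Rabs (clamp a b u - clamp a b v) <= Rabs (u - v).
Proof.
  intros H. unfold clamp, Rmax, Rmin. unfold Rabs.
  repeat destruct Rle_dec; repeat destruct Rcase_abs; lra.
Qed.

Lemma cont_clamp a b f s : a <= b -> (forall u, a <= u <= b -> cont_in a b f u) ->
  continuous (fun s => f (clamp a b s)) s.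
Proof.
  intros Hab Hf. apply filterlim_locally. intros eps.
  destruct (cont_in_eps a b f (clamp a b s) (Hf _ (clamp_in a b s Hab)) eps (cond_pos eps)) as [del [Hd H]].
  exists (mkposreal del Hd). intros u Hu. apply ball_R1 in Hu. simpl in Hu. apply ball_R.
  apply H. apply clamp_in, Hab. eapply Rle_lt_trans. apply clamp_lip, Hab. exact Hu.
Qed.

Definition pp (u e : R) : R := if Rlt_dec 0 u then Rpower u e else 0.

Lemma pp_pos u e : 0 < u -> pp u e = Rpower u e.
Proof. intros H. unfold pp. destruct Rlt_dec; [reflexivity|lra]. Qed.

Lemma pp_nonpos u e : u <= 0 -> pp u e = 0.
Proof. intros H. unfold pp. destruct Rlt_dec; [lra|reflexivity]. Qed.

Lemma pp_ge0 u e : 0 <= pp u e.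
Proof. unfold pp. destruct Rlt_dec. left; apply Rpower_pos. lra. Qed.

Lemma Rpower_cont (e x : R) : 0 < x -> continuous (fun u => Rpower u e) x.
Proof.
  intros Hx. apply (ex_derive_continuous (fun u => Rpower u e)).
  exists (e * Rpower x (e - 1)). apply is_derive_Reals. apply derivable_pt_lim_power, Hx.
Qed.

Lemma pp_cont e u : 0 < e -> continuous (fun u => pp u e) u.
Proof.
  intros He. destruct (Rtotal_order u 0) as [Hn|[H0|Hp]].
  - apply continuous_ext_loc with (fun _ => 0).
    + exists (mkposreal (- u) ltac:(lra)). intros y Hy. change R in y. apply ball_R1 in Hy. simpl in Hy.
      apply Rabs_lt_between in Hy.  rewrite pp_nonpos by lra. reflexivity.
    + apply continuous_const.
  - subst u. apply filterlim_locally. intros eps.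
    assert (Hd : 0 < Rpower eps (/ e)) by apply Rpower_pos.
    exists (mkposreal _ Hd). intros y Hy. change R in y. apply ball_R1 in Hy. simpl in Hy. rewrite Rminus_0_r in Hy.
    apply ball_R2. rewrite (pp_nonpos 0) by lra. rewrite Rminus_0_r.
    destruct (Rle_dec y 0) as [n|n]. rewrite pp_nonpos by lra. rewrite Rabs_R0. apply cond_pos. apply Rnot_le_lt in n.
    rewrite pp_pos by lra. rewrite Rabs_right by (left; apply Rpower_pos).
    apply Rle_lt_trans with (Rpower (Rabs y) e).
    + rewrite Rabs_right by lra. lra.
    + apply Rlt_le_trans with (Rpower (Rpower eps (/ e)) e).
      * apply Rlt_Rpower_l; auto. split. apply Rabs_pos_lt. lra. exact Hy.
      * rewrite Rpower_mult, Rinv_l, Rpower_1 by (apply cond_pos || lra). lra.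
  - apply continuous_ext_loc with (fun u => Rpower u e).
    + exists (mkposreal u Hp). intros y Hy. change R in y. apply ball_R1 in Hy. simpl in Hy.
      apply Rabs_lt_between in Hy. rewrite pp_pos by lra. reflexivity.
    + apply Rpower_cont, Hp.
Qed.


Lemma cont_eps f s : continuous f s ->
  forall eps, 0 < eps -> exists del, 0 < del /\ forall u, Rabs (u - s) < del -> Rabs (f u - f s) < eps.
Proof.
  intros H eps Heps. apply filterlim_locally with (eps := mkposreal eps Heps) in H.
  destruct H as [del Hd]. exists del. split. apply cond_pos.
  intros u Hu. apply ball_R1. apply Hd. apply ball_R2. exact Hu.
Qed.

Definition yt (a b : R) (d : nat -> R -> R) (s : R) : R := d 1%nat (clamp a b s).
Definition xt (a b : R) (x : R -> R) (d : nat -> R -> R) (s : R) : R := x a + RInt (yt a b d) a s.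
Definition Nj (a b : R) (d : nat -> R -> R) (j : nat) (s : R) : R :=
  RInt (fun u => (u - a) ^ j * yt a b d u) a s.

Lemma yt_cont a b n x d s : a < b -> (1 <= n)%nat -> Cn_derivs a b n x d -> continuous (yt a b d) s.
Proof.
  intros Hab Hn [H0 [H1 H2]]. unfold yt. apply cont_clamp. lra.
  intros u Hu. apply H2; auto.
Qed.

Lemma yt_bound a b n x d : a < b -> (1 <= n)%nat -> Cn_derivs a b n x d ->
  exists K, 0 <= K /\ forall s, Rabs (yt a b d s) <= K.
Proof.
  intros Hab Hn Hc.
  destruct (continuity_ab_maj (fun s => Rabs (yt a b d s)) a b) as [M [HM _]]. lra.
  { intros c _. apply continuity_pt_filterlim.
    apply (continuous_comp (yt a b d) Rabs). apply (yt_cont a b n x d); auto.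
    apply continuous_Rabs. }
  exists (Rabs (yt a b d M)). split. apply Rabs_pos.
  intros s. replace (yt a b d s) with (yt a b d (clamp a b s)).
  apply HM. apply clamp_in. lra.
  unfold yt. rewrite (clamp_id a b (clamp a b s)). reflexivity. apply clamp_in. lra.
Qed.

Lemma powyt_cont a b n x d j s : a < b -> (1 <= n)%nat -> Cn_derivs a b n x d ->
  continuous (fun u => (u - a) ^ j * yt a b d u) s.
Proof.
  intros Hab Hn Hc. apply (continuous_mult (fun u => (u - a) ^ j) (yt a b d)).
  apply (ex_derive_continuous (fun u => (u - a) ^ j)). auto_derive. auto.
  apply (yt_cont a b n x d); auto.
Qed.

Lemma is_derive_RInt_all (f : R -> R) (c s : R) : (forall u, continuous f u) ->
  is_derive (fun s => RInt f c s) s (f s).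
Proof.
  intros Hf. apply (is_derive_RInt f (fun s => RInt f c s) c s).
  - apply filter_forall. intros u. apply (RInt_correct (V:=R_CompleteNormedModule)). apply (ex_RInt_continuous (V:=R_CompleteNormedModule)). intros z _. apply Hf.
  - apply Hf.
Qed.

Lemma xt_derive a b n x d s : a < b -> (1 <= n)%nat -> Cn_derivs a b n x d ->
  is_derive (xt a b x d) s (yt a b d s).
Proof.
  intros Hab Hn Hc. unfold xt.
  replace (yt a b d s) with (0 + yt a b d s) by ring.
  apply (is_derive_plus (fun _ => x a) (fun s => RInt (yt a b d) a s)).
  apply is_derive_Reals. apply (derivable_pt_lim_const (x a)). apply is_derive_RInt_all. intros u. apply (yt_cont a b n x d); auto.
Qed.

Lemma Nj_derive a b n x d j s : a < b -> (1 <= n)%nat -> Cn_derivs a b n x d ->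
  is_derive (Nj a b d j) s ((s - a) ^ j * yt a b d s).
Proof.
  intros Hab Hn Hc. unfold Nj. apply (is_derive_RInt_all (fun u => (u - a) ^ j * yt a b d u)).
  intros u. apply (powyt_cont a b n x d); auto.
Qed.

Lemma xt_cont a b n x d s : a < b -> (1 <= n)%nat -> Cn_derivs a b n x d -> continuous (xt a b x d) s.
Proof.
  intros Hab Hn Hc. apply (ex_derive_continuous (xt a b x d)). eexists. apply (xt_derive a b n x d); auto.
Qed.

Lemma xt_eq a b n x d s : a < b -> (1 <= n)%nat -> Cn_derivs a b n x d -> a <= s <= b ->
  d O s = xt a b x d s.
Proof.
  intros Hab Hn Hc Hs.
  set (D := fun s => d O s - xt a b x d s).
  destruct Hc as [H0 [H1 H2]].
  assert (HD : forall u, a < u < b -> is_derive D u 0).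
  { intros u Hu. unfold D. replace 0 with (d 1%nat u - yt a b d u).
    apply (is_derive_minus (d O) (xt a b x d)).
    apply is_derive_Reals. apply (deriv_in_interior a b). apply H1. lia. lra. exact Hu.
    apply (xt_derive a b n x d); auto. split; auto.
    unfold yt. rewrite clamp_id by lra. ring. }
  assert (Hconst : forall c u, a < c -> c < u -> u < b -> D u = D c).
  { intros c u Hc Hcu Hu.
    destruct (MVT_gen D c u (fun _ => 0)) as [xi [_ Heq]].
    - intros z Hz. rewrite Rmin_left, Rmax_right in Hz by lra. apply HD. lra.
    - intros z Hz. rewrite Rmin_left, Rmax_right in Hz by lra.
      apply continuity_pt_filterlim. apply (ex_derive_continuous D). eexists. apply HD. lra.
    - lra. }
  assert (HDa : D a = 0).
  { unfold D, xt. rewrite H0 by lra. rewrite RInt_point. unfold zero; simpl. ring. }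
  assert (Hcont : forall e, a <= e <= b -> forall eps, 0 < eps -> exists del, 0 < del /\
             forall u, a <= u <= b -> Rabs (u - e) < del -> Rabs (D u - D e) < eps).
  { intros e He eps Heps.
    destruct (cont_in_eps a b (d O) e (H2 O e ltac:(lia) He) (eps/2) ltac:(lra)) as [d1 [Hd1 Hd1']].
    destruct (cont_eps (xt a b x d) e (xt_cont a b n x d e Hab Hn (conj H0 (conj H1 H2))) (eps/2) ltac:(lra)) as [d2 [Hd2 Hd2']].
    exists (Rmin d1 d2). split. apply Rmin_pos; lra.
    intros u Hu Hue. assert (Hm1 := Rmin_l d1 d2). assert (Hm2 := Rmin_r d1 d2).
    unfold D. specialize (Hd1' u Hu ltac:(lra)). specialize (Hd2' u ltac:(lra)).
    replace (d 0%nat u - xt a b x d u - (d 0%nat e - xt a b x d e))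
      with ((d 0%nat u - d 0%nat e) - (xt a b x d u - xt a b x d e)) by ring.
    eapply Rle_lt_trans. apply Rabs_triang. rewrite Rabs_Ropp. lra. }
  assert (Hint : forall u, a < u < b -> D u = 0).
  { intros u Hu. destruct (Req_dec (D u) 0) as [E|E]; [exact E|]. exfalso.
    destruct (Hcont a ltac:(lra) (Rabs (D u)) ltac:(apply Rabs_pos_lt; exact E)) as [del [Hdel Hdd]].
    set (c := a + Rmin del (u - a) / 2).
    assert (Hm1 := Rmin_l del (u - a)). assert (Hm2 := Rmin_r del (u - a)).
    assert (Hm0 : 0 < Rmin del (u - a)) by (apply Rmin_pos; lra).
    specialize (Hdd c ltac:(unfold c; lra) ltac:(unfold c; rewrite Rabs_right; lra)).
    rewrite HDa, Rminus_0_r in Hdd. rewrite <- (Hconst c u) in Hdd; unfold c; lra. }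
  destruct (Rle_lt_or_eq_dec a s (proj1 Hs)) as [Has|Has].
  2:{ subst s. assert (E := HDa). unfold D in E. lra. }
  destruct (Rle_lt_or_eq_dec s b (proj2 Hs)) as [Hsb|Hsb].
  { assert (E := Hint s (conj Has Hsb)). unfold D in E. lra. }
  subst s.
  destruct (Req_dec (D b) 0) as [E|E]. unfold D in E. lra. exfalso.
  destruct (Hcont b ltac:(lra) (Rabs (D b)) ltac:(apply Rabs_pos_lt; exact E)) as [del [Hdel Hdd]].
  set (c := b - Rmin del (b - a) / 2).
  assert (Hm1 := Rmin_l del (b - a)). assert (Hm2 := Rmin_r del (b - a)).
  assert (Hm0 : 0 < Rmin del (b - a)) by (apply Rmin_pos; lra).
  specialize (Hdd c ltac:(unfold c; lra) ltac:(unfold c; rewrite Rabs_left; lra)).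
  rewrite (Hint c) in Hdd by (unfold c; lra). rewrite Rminus_0_l, Rabs_Ropp in Hdd. lra.
Qed.


Definition kf (a b al : R) (d : nat -> R -> R) (s u : R) : R := pp (s - u) (1 - al) * yt a b d u.
Definition Jint (a b al : R) (d : nat -> R -> R) (s : R) : R := RInt (kf a b al d s) a s.

Lemma kf_cont a b n x d al s u : a < b -> (1 <= n)%nat -> Cn_derivs a b n x d -> al < 1 ->
  continuous (kf a b al d s) u.
Proof.
  intros Hab Hn Hc Hal. unfold kf.
  apply (continuous_mult (fun u => pp (s - u) (1 - al)) (yt a b d)).
  - apply (continuous_comp (fun u => s - u) (fun v => pp v (1 - al))).
    apply (ex_derive_continuous (fun u => s - u)). auto_derive. auto.
    apply pp_cont. lra.
  - apply (yt_cont a b n x d); auto.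
Qed.

Lemma is_derive_eq (f : R -> R) x l l' : is_derive f x l -> l = l' -> is_derive f x l'.
Proof. intros H E. subst. exact H. Qed.

Definition Hf (a b al : R) (x : R -> R) (d : nat -> R -> R) (s u : R) : R :=
  / (1 - al) * (- (pp (s - u) (1 - al) * xt a b x d u) + RInt (kf a b al d s) a u).

Lemma Hf_derive a b n x d al s u : a < b -> (1 <= n)%nat -> Cn_derivs a b n x d -> 0 < al < 1 -> u < s ->
  is_derive (Hf a b al x d s) u (Rpower (s - u) (- al) * xt a b x d u).
Proof.
  intros Hab Hn Hc Hal Hus.
  set (G := fun u => / (1 - al) * (- (Rpower (s - u) (1 - al) * xt a b x d u) + RInt (kf a b al d s) a u)).
  apply is_derive_ext_loc with G.
  { exists (mkposreal (s - u) ltac:(lra)). intros v Hv. apply ball_R1 in Hv. simpl in Hv.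
    apply Rabs_lt_between in Hv. unfold G, Hf. rewrite pp_pos by lra. reflexivity. }
  assert (H1 := is_derive_Rpower_sub s (1 - al) u ltac:(lra)).
  assert (H2 := xt_derive a b n x d u Hab Hn Hc).
  assert (H3 := is_derive_mult _ _ u _ _ H1 H2 Rmult_comm).
  assert (H4 := is_derive_opp _ _ _ H3).
  assert (H5 := is_derive_RInt_all (kf a b al d s) a u (fun v => kf_cont a b n x d al s v Hab Hn Hc ltac:(lra))).
  assert (H6 := is_derive_plus _ _ _ _ _ H4 H5).
  assert (H7 := is_derive_scal _ _ (/ (1 - al)) _ H6).
  unfold G. eapply is_derive_eq. eapply is_derive_ext; [|exact H7].
  - intros t. reflexivity.
  - unfold plus, mult, opp, kf; simpl. rewrite pp_pos by lra.
    rewrite <- (Rpower_m1 (s - u) (1 - al)) by lra.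
    replace (1 - al - 1) with (- al) by ring. field. lra.
Qed.

Lemma Hf_cont a b n x d al s u : a < b -> (1 <= n)%nat -> Cn_derivs a b n x d -> 0 < al < 1 ->
  continuous (Hf a b al x d s) u.
Proof.
  intros Hab Hn Hc Hal. unfold Hf.
  apply (continuous_scal_r (/ (1 - al)) (fun u => - (pp (s - u) (1 - al) * xt a b x d u) + RInt (kf a b al d s) a u)).
  apply (continuous_plus (fun u => - (pp (s - u) (1 - al) * xt a b x d u)) (fun u => RInt (kf a b al d s) a u)).
  - apply (continuous_opp (fun u => pp (s - u) (1 - al) * xt a b x d u)).
    apply (continuous_mult (fun u => pp (s - u) (1 - al)) (xt a b x d)).
    + apply (continuous_comp (fun u => s - u) (fun v => pp v (1 - al))).
      apply (ex_derive_continuous (fun u => s - u)). auto_derive. auto.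
      apply pp_cont. lra.
    + apply (xt_cont a b n x d); auto.
  - apply (ex_derive_continuous (fun u => RInt (kf a b al d s) a u)). eexists.
    apply is_derive_RInt_all. intros v. apply (kf_cont a b n x d); auto. lra.
Qed.

Lemma RL_val a b n x d al s : a < b -> (1 <= n)%nat -> Cn_derivs a b n x d -> 0 < al < 1 -> a < s <= b ->
  RL_integral a al x s = / (1 - al) * (x a * Rpower (s - a) (1 - al) + Jint a b al d s).
Proof.
  intros Hab Hn Hc Hal Hs.
  assert (HD : forall u, u < s -> Derive (Hf a b al x d s) u = Rpower (s - u) (- al) * xt a b x d u).
  { intros u Hu. apply is_derive_unique. apply (Hf_derive a b n x d); auto. }
  assert (Hprod : forall P : R -> Prop, (forall z, a <= z < s -> P z) ->
     filter_prod (at_point a) (at_left s) (fun ab => forall z, Rmin (fst ab) (snd ab) <= z <= Rmax (fst ab) (snd ab) -> P z)).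
  { intros P HP. apply (Filter_prod _ _ _ (fun u => u = a) (fun u => a < u < s)).
    - reflexivity.
    - exists (mkposreal (s - a) ltac:(lra)). intros y Hy Hys. apply ball_R1 in Hy. simpl in Hy.
      apply Rabs_lt_between in Hy. lra.
    - intros u v Hu [Hv1 Hv2] z Hz. subst u. simpl in Hz.
      rewrite Rmin_left, Rmax_right in Hz by lra. apply HP. lra. }
  assert (Hgen : is_RInt_gen (Derive (Hf a b al x d s)) (at_point a) (at_left s)
            (Hf a b al x d s s - Hf a b al x d s a)).
  { eapply (@is_RInt_gen_Derive (at_point a) (at_left s) _ _ (Hf a b al x d s)).
    - apply Hprod. intros z Hz. eexists. apply (Hf_derive a b n x d); auto. lra.
    - apply Hprod. intros z Hz.
      apply continuous_ext_loc with (fun v => Rpower (s - v) (- al) * xt a b x d v).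
      + exists (mkposreal (s - z) ltac:(lra)). intros v Hv. apply ball_R1 in Hv. simpl in Hv.
        apply Rabs_lt_between in Hv. symmetry. apply HD. lra.
      + apply (continuous_mult (fun v => Rpower (s - v) (- al)) (xt a b x d)).
        * apply (ex_derive_continuous (fun v => Rpower (s - v) (- al))). eexists.
          apply is_derive_Rpower_sub. lra.
        * apply (xt_cont a b n x d); auto.
    - intros P HP. exact (locally_singleton _ _ HP).
    - apply (filterlim_filter_le_1 (F := locally s)). apply filter_le_within.
      apply (Hf_cont a b n x d); auto. }
  apply (is_RInt_gen_ext _ (fun u => Rpower (s - u) (- al) * x u)) in Hgen.
  2:{ assert (Hprod' : forall P : R -> Prop, (forall z, a < z < s -> P z) ->
     filter_prod (at_point a) (at_left s) (fun ab => forall z, Rmin (fst ab) (snd ab) < z < Rmax (fst ab) (snd ab) -> P z)).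
      { intros P HP. apply (Filter_prod _ _ _ (fun u => u = a) (fun u => a < u < s)).
        - reflexivity.
        - exists (mkposreal (s - a) ltac:(lra)). intros y Hy Hys. apply ball_R1 in Hy. simpl in Hy.
          apply Rabs_lt_between in Hy. lra.
        - intros u v Hu [Hv1 Hv2] z Hz. subst u. simpl in Hz.
          rewrite Rmin_left, Rmax_right in Hz by lra. apply HP. lra. }
      apply Hprod'. intros z Hz. rewrite HD by lra. f_equal.
      destruct Hc as [H0 HH]. rewrite <- H0 by lra. symmetry. apply (xt_eq a b n x d); auto. split; auto. lra. }
  unfold RL_integral. rewrite (is_RInt_gen_unique _ _ Hgen).
  unfold Hf, Jint. rewrite Rminus_diag. rewrite pp_nonpos by lra. rewrite pp_pos by lra.
  rewrite RInt_point. unfold xt. rewrite RInt_point. unfold zero; simpl. field. lra.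
Qed.


Lemma exRc (f : R -> R) u v : (forall z, continuous f z) -> ex_RInt f u v.
Proof. intros H. apply (ex_RInt_continuous (V:=R_CompleteNormedModule)). intros z _. apply H. Qed.

Lemma RInt_scal_R (f : R -> R) u v c : ex_RInt f u v -> RInt (fun z => c * f z) u v = c * RInt f u v.
Proof. intros H. apply (RInt_scal (V:=R_CompleteNormedModule)). exact H. Qed.

Lemma RInt_plus_R (f g : R -> R) u v : ex_RInt f u v -> ex_RInt g u v ->
  RInt (fun z => f z + g z) u v = RInt f u v + RInt g u v.
Proof. intros H1 H2. apply (RInt_plus (V:=R_CompleteNormedModule)); auto. Qed.

Lemma RInt_const_R u v c : RInt (fun _ => c) u v = (v - u) * c.
Proof. rewrite (RInt_const (V:=R_CompleteNormedModule)). reflexivity. Qed.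

Lemma Pn_cont al N a T u : T <> 0 -> continuous (fun z => Pn al N ((z - a) / T)) u.
Proof.
  intros HT. apply (ex_derive_continuous (fun z => Pn al N ((z - a) / T))).
  eexists. apply (is_derive_comp (Pn al N) (fun z => (z - a) / T)).
  apply Pn_derive. auto_derive; auto.
Qed.

Lemma Rpower_minus_INR T e j : 0 < T -> Rpower T (e - INR j) = Rpower T e * / T ^ j.
Proof.
  intros HT. unfold Rminus. rewrite Rpower_plus, Rpower_Ropp, Rpower_pow by exact HT. reflexivity.
Qed.

Definition fn (a b al : R) (d : nat -> R -> R) (N : nat) (s : R) : R :=
  sum_n (fun j => dd al j * Rpower (s - a) (1 - al - INR j) * Nj a b d j s) N.

Lemma term_int a b n x d al j s : a < b -> (1 <= n)%nat -> Cn_derivs a b n x d -> a < s ->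
  dd al j * Rpower (s - a) (1 - al - INR j) * Nj a b d j s =
  RInt (fun z => Rpower (s - a) (1 - al) * (dd al j * ((z - a) / (s - a)) ^ j) * yt a b d z) a s.
Proof.
  intros Hab Hn Hc Hs. unfold Nj.
  rewrite <- RInt_scal_R.
  2:{ apply exRc. intros z. apply (powyt_cont a b n x d); auto. }
  apply RInt_ext. intros z _.
  rewrite Rpower_minus_INR by lra. unfold Rdiv. rewrite Rpow_mult_distr, pow_inv. fixeq; ring.
Qed.

Lemma fn_int a b n x d al N s : a < b -> (1 <= n)%nat -> Cn_derivs a b n x d -> a < s ->
  fn a b al d N s = RInt (fun z => Rpower (s - a) (1 - al) * Pn al N ((z - a) / (s - a)) * yt a b d z) a s.
Proof.
  intros Hab Hn Hc Hs. unfold fn. induction N as [|N IH].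
  - rewrite sum_O. rewrite (term_int a b n x d) by auto.
    apply RInt_ext. intros z _. unfold Pn. rewrite sum_O. reflexivity.
  - rewrite sum_n_R, IH. rewrite (term_int a b n x d) by auto.
    rewrite <- RInt_plus_R.
    + apply RInt_ext. intros z _. rewrite Pn_S. fixeq; ring.
    + apply exRc. intros z.
      apply (continuous_mult (fun z => Rpower (s - a) (1 - al) * Pn al N ((z - a) / (s - a))) (yt a b d)).
      apply (continuous_mult (fun _ => Rpower (s - a) (1 - al)) (fun z => Pn al N ((z - a) / (s - a)))).
      apply continuous_const. apply Pn_cont. lra. apply (yt_cont a b n x d); auto.
    + apply exRc. intros z.
      apply (continuous_mult (fun z => Rpower (s - a) (1 - al) * (dd al (S N) * ((z - a) / (s - a)) ^ S N)) (yt a b d)).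
      apply (ex_derive_continuous (fun z => Rpower (s - a) (1 - al) * (dd al (S N) * ((z - a) / (s - a)) ^ S N))).
      auto_derive. lra. apply (yt_cont a b n x d); auto.
Qed.

Lemma integrand_cont a b n x d al N s z : a < b -> (1 <= n)%nat -> Cn_derivs a b n x d -> a < s ->
  continuous (fun z => Rpower (s - a) (1 - al) * Pn al N ((z - a) / (s - a)) * yt a b d z) z.
Proof.
  intros Hab Hn Hc Hs.
  apply (continuous_mult (fun z => Rpower (s - a) (1 - al) * Pn al N ((z - a) / (s - a))) (yt a b d)).
  apply (continuous_mult (fun _ => Rpower (s - a) (1 - al)) (fun z => Pn al N ((z - a) / (s - a)))).
  apply continuous_const. apply Pn_cont. lra. apply (yt_cont a b n x d); auto.
Qed.

Lemma Jint_fn_bound a b n x d al N s K : a < b -> (1 <= n)%nat -> Cn_derivs a b n x d -> 0 < al < 1 -> a < s ->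
  (forall u, Rabs (yt a b d u) <= K) ->
  Rabs (Jint a b al d s - fn a b al d N s) <= (s - a) * (Rpower (s - a) (1 - al) * cc al N * K).
Proof.
  intros Hab Hn Hc Hal Hs HK. rewrite (fn_int a b n x d) by auto. unfold Jint.
  set (g := fun z => Rpower (s - a) (1 - al) * Pn al N ((z - a) / (s - a)) * yt a b d z).
  assert (Hg : forall z, continuous g z) by (intros; apply (integrand_cont a b n x d); auto).
  assert (Hk : forall z, continuous (kf a b al d s) z) by (intros; apply (kf_cont a b n x d); auto; lra).
  assert (Hd : forall z, continuous (fun z => kf a b al d s z - g z) z).
  { intros z. apply (continuous_plus (kf a b al d s) (fun z => - g z)). auto. apply (continuous_opp g). auto. }
  rewrite <- (RInt_minus (V:=R_CompleteNormedModule)) by (apply exRc; auto).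
  eapply Rle_trans. apply abs_RInt_le. lra. apply exRc. exact Hd.
  rewrite <- RInt_const_R. apply RInt_le. lra.
  apply exRc. intros z. apply (continuous_comp (fun z => kf a b al d s z - g z) Rabs). apply Hd. apply continuous_Rabs.
  apply exRc. intros; apply continuous_const.
  intros z Hz. unfold minus, plus, opp; simpl. unfold kf, g.
  set (T := s - a). set (w := (z - a) / T).
  assert (HT : 0 < T) by (unfold T; lra).
  assert (Hw : 0 <= w < 1).
  { unfold w. split. apply Rdiv_le_0_compat; lra. apply Rmult_lt_reg_r with T; auto.
    unfold Rdiv. rewrite Rmult_assoc, Rinv_l, Rmult_1_r by lra. unfold T. lra. }
  rewrite pp_pos by lra.
  replace (s - z) with (T * (1 - w)) by (unfold w, T; field; lra).
  rewrite <- Rpower_mult_distr by lra.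
  replace (Rpower T (1 - al) * Rpower (1 - w) (1 - al) * yt a b d z + - (Rpower T (1 - al) * Pn al N w * yt a b d z))
    with (Rpower T (1 - al) * (Rpower (1 - w) (1 - al) - Pn al N w) * yt a b d z) by ring.
  rewrite !Rabs_mult. rewrite (Rabs_right (Rpower T (1 - al))) by (left; apply Rpower_pos).
  assert (Hkb := kernel_bound al N w Hal Hw).
  assert (Hp := Rpower_pos T (1 - al)).
  apply Rmult_le_compat. apply Rmult_le_pos. lra. apply Rabs_pos. apply Rabs_pos.
  apply Rmult_le_compat_l. lra. rewrite Rabs_minus_sym, Rabs_right by lra. lra.
  apply HK.
Qed.

Lemma is_derive_Rpower_sa (a e s : R) : a < s ->
  is_derive (fun s => Rpower (s - a) e) s (e * Rpower (s - a) (e - 1)).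
Proof.
  intros H. apply (is_derive_ext (fun s => Rpower (- a + s) e)).
  intros t. f_equal. ring.
  replace (s - a) with (- a + s) by ring. apply is_derive_Rpower_shift. lra.
Qed.

Lemma dd_gam al j : dd al j * (1 - al - INR j) = (1 - al) * cc al j.
Proof.
  unfold dd, cc. assert (H := poch_shift (al - 1) j). replace (al - 1 + 1) with al in H by ring.
  change (poch (al - 1) (S j)) with (poch (al - 1) j * (al - 1 + INR j)) in H.
  assert (Hf := INR_fact_neq_0 j).
  replace (poch (al-1) j / INR (fact j) * (1 - al - INR j)) with (- (poch (al - 1) j * (al - 1 + INR j)) / INR (fact j)) by (field; auto).
  rewrite <- H. field; auto.
Qed.

Lemma Rpower_pow_mul T e j : 0 < T -> Rpower T (e - INR j) * T ^ j = Rpower T e.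
Proof. intros HT. rewrite Rpower_minus_INR by exact HT. field. apply pow_nonzero. lra. Qed.

Definition uu (a b al : R) (d : nat -> R -> R) (s : R) (j : nat) : R :=
  cc al j * Rpower (s - a) (1 - al - INR j - 1) * Nj a b d j s.

Definition fnd (a b al : R) (d : nat -> R -> R) (N : nat) (s : R) : R :=
  (1 - al) * sum_n (uu a b al d s) N + cc al N * Rpower (s - a) (1 - al) * yt a b d s.

Lemma term_derive a b n x d al j s : a < b -> (1 <= n)%nat -> Cn_derivs a b n x d -> a < s ->
  is_derive (fun s => dd al j * Rpower (s - a) (1 - al - INR j) * Nj a b d j s) s
    ((1 - al) * uu a b al d s j + dd al j * Rpower (s - a) (1 - al) * yt a b d s).
Proof.
  intros Hab Hn Hc Hs.
  assert (H1 := is_derive_Rpower_sa a (1 - al - INR j) s Hs).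
  assert (H2 := Nj_derive a b n x d j s Hab Hn Hc).
  assert (H3 := is_derive_mult _ _ s _ _ H1 H2 Rmult_comm).
  assert (H4 := is_derive_scal _ _ (dd al j) _ H3).
  eapply is_derive_eq. eapply is_derive_ext; [|exact H4].
  intros t. unfold mult; simpl. ring.
  unfold mult, plus; simpl. unfold uu.
  rewrite <- (Rpower_pow_mul (s - a) (1 - al) j) by lra.
  rewrite Rpower_pow_mul by lra.
  transitivity ((dd al j * (1 - al - INR j)) * (Rpower (s - a) (1 - al - INR j - 1) * Nj a b d j s)
     + dd al j * (Rpower (s - a) (1 - al - INR j) * (s - a) ^ j) * yt a b d s).
  ring. rewrite dd_gam, Rpower_pow_mul by lra. ring.
Qed.

Lemma fn_derive a b n x d al N s : a < b -> (1 <= n)%nat -> Cn_derivs a b n x d -> a < s ->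
  is_derive (fn a b al d N) s (fnd a b al d N s).
Proof.
  intros Hab Hn Hc Hs. unfold fn, fnd. induction N as [|N IH].
  - apply (is_derive_ext (fun s => dd al 0 * Rpower (s - a) (1 - al - INR 0) * Nj a b d 0 s)).
    intros t. rewrite sum_O. reflexivity.
    eapply is_derive_eq. apply (term_derive a b n x d); auto.
    rewrite sum_O, dd_0, cc_0. fixeq; ring.
  - apply (is_derive_ext (fun s => sum_n (fun j => dd al j * Rpower (s - a) (1 - al - INR j) * Nj a b d j s) N
        + dd al (S N) * Rpower (s - a) (1 - al - INR (S N)) * Nj a b d (S N) s)).
    intros t. rewrite sum_n_R. reflexivity.
    eapply is_derive_eq. apply (is_derive_plus _ _ _ _ _ IH (term_derive a b n x d al (S N) s Hab Hn Hc Hs)).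
    unfold plus; simpl. rewrite sum_n_R, cc_S. fixeq; ring.
Qed.

Lemma Nj_bound a b n x d j s K : a < b -> (1 <= n)%nat -> Cn_derivs a b n x d -> a <= s ->
  (forall u, Rabs (yt a b d u) <= K) ->
  Rabs (Nj a b d j s) <= K * (s - a) ^ S j / INR (S j).
Proof.
  intros Hab Hn Hc Hs HK. unfold Nj.
  assert (Hcf : forall z, continuous (fun u => (u - a) ^ j * yt a b d u) z) by (intros; apply (powyt_cont a b n x d); auto).
  eapply Rle_trans. apply abs_RInt_le. exact Hs. apply exRc. exact Hcf.
  assert (HI : is_RInt (fun u => K * (u - a) ^ j) a s (K * (s - a) ^ S j / INR (S j))).
  { assert (HS : 0 < INR (S j)) by (apply lt_0_INR; lia).
    replace (K * (s - a) ^ S j / INR (S j)) with (minus (K * (s - a) ^ S j / INR (S j)) (K * (a - a) ^ S j / INR (S j))).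
    2:{ set (q := INR (S j)) in *. replace (a - a) with 0 by ring. rewrite pow_i by lia. unfold minus, plus, opp; simpl. field. lra. }
    apply (is_RInt_derive (fun u => K * (u - a) ^ S j / INR (S j))).
    - intros z _. assert (Hl : is_derive (fun u => u - a) z 1) by (auto_derive; auto; ring).
      eapply is_derive_eq. apply (is_derive_ext (fun u => (K / INR (S j)) * ((u - a) ^ S j))).
      intros; unfold Rdiv; fixeq; ring. apply is_derive_scal. apply is_derive_pow. exact Hl.
      simpl pred. fixeq. cbv beta. field. lra.
    - intros z _. apply (ex_derive_continuous (fun u => K * (u - a) ^ j)). auto_derive. auto. }
  rewrite <- (is_RInt_unique _ _ _ _ HI).
  apply RInt_le. exact Hs.
  apply exRc. intros z. apply (continuous_comp (fun u => (u - a) ^ j * yt a b d u) Rabs). apply Hcf. apply continuous_Rabs.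
  eexists. exact HI.
  intros z Hz. rewrite Rabs_mult, Rabs_right by (apply Rle_ge, pow_le; lra).
  rewrite Rmult_comm. apply Rmult_le_compat_r. apply pow_le; lra. apply HK.
Qed.

Lemma tail_partial al (u : nat -> R) C : 0 < al < 1 -> 0 <= C ->
  (forall j, Rabs (u j) <= C * (- dd al (S j))) ->
  forall N k, Rabs (sum_n u (N + k) - sum_n u N) <= C * (cc al (S N) - cc al (S (N + k))).
Proof.
  intros Hal HC Hu N k. induction k as [|k IH].
  - rewrite Nat.add_0_r. rewrite Rminus_diag, Rabs_R0. lra.
  - rewrite Nat.add_succ_r, sum_n_R.
    replace (sum_n u (N + k) + u (S (N + k)) - sum_n u N) with ((sum_n u (N + k) - sum_n u N) + u (S (N + k))) by (fixeq; ring).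
    eapply Rle_trans. apply Rabs_triang.
    rewrite (cc_S al (S (N + k))).
    specialize (Hu (S (N + k))). lra.
Qed.

Lemma sum_w al C N : sum_n (fun j => C * (- dd al (S j))) N = C * (1 - cc al (S N)).
Proof.
  induction N as [|N IH].
  - rewrite sum_O, cc_S, cc_0. fixeq; ring.
  - rewrite sum_n_R, IH, (cc_S al (S N)). fixeq; ring.
Qed.

Lemma tail_bound al (u : nat -> R) C : 0 < al < 1 -> 0 <= C ->
  (forall j, Rabs (u j) <= C * (- dd al (S j))) ->
  ex_series u /\ forall N, Rabs (Series u - sum_n u N) <= C * cc al (S N).
Proof.
  intros Hal HC Hu.
  assert (Hlc := cc_lim0 al Hal).
  assert (Hex : ex_series u).
  { apply (ex_series_le u (fun j => C * (- dd al (S j)))). exact Hu.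
    exists (C * 1). apply is_series_lim.
    apply is_lim_seq_ext with (fun N => C * (1 - cc al (S N))). intros N. symmetry. apply sum_w.
    replace (C * 1) with (C * (1 - 0)) by ring.
    apply (is_lim_seq_scal_l _ C (1 - 0)). apply is_lim_seq_minus'. apply is_lim_seq_const.
    apply (is_lim_seq_incr_1 (cc al)). exact Hlc. }
  split. exact Hex.
  intros N. assert (HS := Series_correct u Hex).
  assert (HL : is_lim_seq (fun k => sum_n u (N + k)) (Series u)).
  { apply is_lim_seq_ext with (fun k => sum_n u (k + N)). intros k. rewrite Nat.add_comm. reflexivity.
    apply (is_lim_seq_incr_n (sum_n u) N). exact HS. }
  assert (HL2 := is_lim_seq_abs _ _ (is_lim_seq_minus' _ _ _ _ HL (is_lim_seq_const (sum_n u N)))).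
  assert (Hb : forall k, Rabs (sum_n u (N + k) - sum_n u N) <= C * cc al (S N)).
  { intros k. eapply Rle_trans. apply (tail_partial al u C Hal HC Hu N k).
    assert (H0 := cc_pos al (S (N + k)) (proj1 Hal)).
    assert (0 <= C * cc al (S (N + k))) by (apply Rmult_le_pos; lra). lra. }
  assert (Hle := is_lim_seq_le _ (fun _ => C * cc al (S N)) _ _ Hb HL2 (is_lim_seq_const _)).
  simpl in Hle. exact Hle.
Qed.


Lemma lim_by_bound (u v : nat -> R) (l c : R) : (forall N, Rabs (u N - l) <= c * v N) -> is_lim_seq v 0 ->
  is_lim_seq u l.
Proof.
  intros H Hv. apply is_lim_seq_Reals. apply is_lim_seq_Reals in Hv.
  intros eps Heps. destruct (Hv (eps / (Rabs c + 1))) as [N HN].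
  { apply Rdiv_lt_0_compat. lra. assert (0 <= Rabs c) by apply Rabs_pos. lra. }
  exists N. intros n Hn. specialize (HN n Hn). unfold Rdist in *. rewrite Rminus_0_r in HN.
  assert (Hc := Rabs_pos c).
  eapply Rle_lt_trans. apply H.
  apply Rle_lt_trans with (Rabs c * Rabs (v n)).
  - rewrite <- Rabs_mult. apply Rle_abs.
  - apply Rle_lt_trans with ((Rabs c + 1) * Rabs (v n)).
    + apply Rmult_le_compat_r. apply Rabs_pos. lra.
    + apply (Rmult_lt_compat_l (Rabs c + 1)) in HN; [|lra].
      replace ((Rabs c + 1) * (eps / (Rabs c + 1))) with eps in HN by (field; lra). lra.
Qed.

Lemma uu_bound a b n x d al s K j : a < b -> (1 <= n)%nat -> Cn_derivs a b n x d -> 0 < al < 1 -> a < s ->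
  (forall u, Rabs (yt a b d u) <= K) ->
  Rabs (uu a b al d s j) <= (K * Rpower (s - a) (1 - al) / (1 - al)) * (- dd al (S j)).
Proof.
  intros Hab Hn Hc Hal Hs HK. unfold uu.
  assert (HN := Nj_bound a b n x d j s K Hab Hn Hc ltac:(lra) HK).
  assert (Hcc := cc_pos al j (proj1 Hal)).
  assert (HR := Rpower_pos (s - a) (1 - al - INR j - 1)).
  assert (HSj : 0 < INR (S j)) by (apply lt_0_INR; lia).
  rewrite !Rabs_mult, (Rabs_right (cc al j)), (Rabs_right (Rpower _ _)) by lra.
  eapply Rle_trans. apply Rmult_le_compat_l. apply Rmult_le_pos; lra. exact HN.
  rewrite dd_S.
  replace (1 - al - INR j - 1) with (1 - al - INR (S j)) by (rewrite S_INR; ring).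
  replace (cc al j * Rpower (s - a) (1 - al - INR (S j)) * (K * (s - a) ^ S j / INR (S j)))
    with (cc al j * K / INR (S j) * (Rpower (s - a) (1 - al - INR (S j)) * (s - a) ^ S j)) by (field; lra).
  rewrite Rpower_pow_mul by lra. right. field. lra.
Qed.

Definition gg (a b al : R) (d : nat -> R -> R) (s : R) : R := (1 - al) * Series (uu a b al d s).

Lemma cc_decr al N : 0 < al < 1 -> cc al (S N) <= cc al N.
Proof. intros Hal. rewrite cc_S. assert (H := dd_neg al N Hal). lra. Qed.

Lemma fnd_gg_bound a b n x d al s K N : a < b -> (1 <= n)%nat -> Cn_derivs a b n x d -> 0 < al < 1 -> a < s ->
  0 <= K -> (forall u, Rabs (yt a b d u) <= K) ->
  Rabs (gg a b al d s - fnd a b al d N s) <= 2 * K * Rpower (s - a) (1 - al) * cc al N.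
Proof.
  intros Hab Hn Hc Hal Hs HK0 HK.
  assert (HRp := Rpower_pos (s - a) (1 - al)).
  destruct (tail_bound al (uu a b al d s) (K * Rpower (s - a) (1 - al) / (1 - al)) Hal) as [_ Ht].
  { apply Rdiv_le_0_compat. apply Rmult_le_pos; lra. lra. }
  { intros j. apply (uu_bound a b n x d); auto. }
  specialize (Ht N). unfold gg, fnd.
  replace ((1 - al) * Series (uu a b al d s) - ((1 - al) * sum_n (uu a b al d s) N + cc al N * Rpower (s - a) (1 - al) * yt a b d s))
    with ((1 - al) * (Series (uu a b al d s) - sum_n (uu a b al d s) N) - cc al N * Rpower (s - a) (1 - al) * yt a b d s) by ring.
  eapply Rle_trans. apply Rabs_triang. rewrite Rabs_Ropp, !Rabs_mult.
  rewrite (Rabs_right (1 - al)), (Rabs_right (cc al N)), (Rabs_right (Rpower _ _)) by (assert (H := cc_pos al N (proj1 Hal)); lra).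
  assert (Hd := cc_decr al N Hal). assert (Hp := cc_pos al (S N) (proj1 Hal)).
  apply Rle_trans with ((1 - al) * (K * Rpower (s - a) (1 - al) / (1 - al) * cc al (S N)) + cc al N * Rpower (s - a) (1 - al) * K).
  - apply Rplus_le_compat. apply Rmult_le_compat_l. lra. exact Ht.
    apply Rmult_le_compat_l. apply Rmult_le_pos. assert (H := cc_pos al N (proj1 Hal)); lra. lra. apply HK.
  - replace ((1 - al) * (K * Rpower (s - a) (1 - al) / (1 - al) * cc al (S N))) with (K * Rpower (s - a) (1 - al) * cc al (S N)) by (field; lra).
    assert (K * Rpower (s - a) (1 - al) * cc al (S N) <= K * Rpower (s - a) (1 - al) * cc al N).
    { apply Rmult_le_compat_l. apply Rmult_le_pos; lra. exact Hd. }
    lra.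
Qed.

Lemma Jint_derive a b n x d al t : a < b -> (1 <= n)%nat -> Cn_derivs a b n x d -> 0 < al < 1 -> a < t ->
  derivable_pt_lim (Jint a b al d) t (gg a b al d t).
Proof.
  intros Hab Hn Hc Hal Ht.
  destruct (yt_bound a b n x d Hab Hn Hc) as [K [HK0 HK]].
  assert (Hr : 0 < (t - a) / 2) by lra.
  set (r := mkposreal _ Hr).
  assert (Hball : forall y, Boule t r y -> a + (t - a) / 2 < y < t + (t - a) / 2).
  { intros y Hy. unfold Boule in Hy. simpl in Hy. apply Rabs_lt_between in Hy. lra. }
  apply (CVU_derivable (fn a b al d) (fnd a b al d) (Jint a b al d) (gg a b al d) t r).
  - intros eps Heps.
    set (R3 := Rpower (3 * ((t - a) / 2)) (1 - al)).
    assert (HR3 : 0 < R3) by apply Rpower_pos.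
    assert (Hl := cc_lim0 al Hal). apply is_lim_seq_Reals in Hl.
    destruct (Hl (eps / (2 * K * R3 + 1))) as [N0 HN0].
    { apply Rdiv_lt_0_compat. lra. assert (0 <= 2 * K * R3) by (apply Rmult_le_pos; lra). lra. }
    exists N0. intros m y Hm Hy. apply Hball in Hy.
    specialize (HN0 m Hm). unfold Rdist in HN0. rewrite Rminus_0_r in HN0.
    assert (Hcm := cc_pos al m (proj1 Hal)). rewrite Rabs_right in HN0 by lra.
    eapply Rle_lt_trans. apply (fnd_gg_bound a b n x d al y K m Hab Hn Hc Hal ltac:(lra) HK0 HK).
    assert (HRy : Rpower (y - a) (1 - al) <= R3).
    { unfold R3. apply Rle_Rpower_l. lra. lra. }
    assert (Hk : 0 <= 2 * K * R3) by (apply Rmult_le_pos; lra).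
    apply Rle_lt_trans with ((2 * K * R3) * cc al m).
    + apply Rmult_le_compat_r. lra. apply Rmult_le_compat_l. lra. exact HRy.
    + apply (Rmult_lt_compat_l (2 * K * R3 + 1)) in HN0; [|lra].
      replace ((2 * K * R3 + 1) * (eps / (2 * K * R3 + 1))) with eps in HN0 by (field; lra). lra.
  - intros y Hy. apply Hball in Hy. apply is_lim_seq_Reals.
    apply (lim_by_bound _ (cc al) _ ((y - a) * Rpower (y - a) (1 - al) * K)).
    + intros N. rewrite Rabs_minus_sym. eapply Rle_trans. apply (Jint_fn_bound a b n x d); auto. lra.
      right. ring.
    + apply cc_lim0, Hal.
  - intros m y Hy. apply Hball in Hy. apply is_derive_Reals. apply (fn_derive a b n x d); auto. lra.
  - unfold Boule. rewrite Rminus_diag, Rabs_R0. apply cond_pos.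
Qed.

Definition Fv (a b al : R) (x : R -> R) (d : nat -> R -> R) (s : R) : R :=
  / (1 - al) * (x a * Rpower (s - a) (1 - al) + Jint a b al d s).

Lemma RL_deriv_main a b n x d al t : a < b -> (1 <= n)%nat -> Cn_derivs a b n x d -> 0 < al < 1 -> a < t <= b ->
  deriv_in a b (RL_integral a al x) t (x a * Rpower (t - a) (- al) + Series (uu a b al d t)).
Proof.
  intros Hab Hn Hc Hal Ht.
  apply (deriv_in_of a b _ (Fv a b al x d)).
  - unfold Fv.
    assert (H1 := is_derive_Rpower_sa a (1 - al) t ltac:(lra)).
    assert (H2 := Jint_derive a b n x d al t Hab Hn Hc Hal ltac:(lra)).
    apply is_derive_Reals in H2.
    apply is_derive_Reals.
    eapply is_derive_eq.
    apply (is_derive_scal (fun s => x a * Rpower (s - a) (1 - al) + Jint a b al d s)).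
    apply (is_derive_plus (fun s => x a * Rpower (s - a) (1 - al)) (Jint a b al d)).
    apply is_derive_scal. exact H1. exact H2.
    unfold plus; simpl. unfold gg. replace (1 - al - 1) with (- al) by ring. field. lra.
  - exists (t - a). split. lra. intros u Hu Hut. apply Rabs_lt_between in Hut.
    unfold Fv. apply (RL_val a b n x d); auto. lra.
  - lra.
Qed.


Lemma Gamma_add al m : 0 < al < 1 -> Gamma (al + INR m) = Gamma al * poch al m.
Proof.
  intros Hal. destruct (lim_base_Gamma al) as [_ H]. lra.
  apply Gamma_of. apply lim_upn. apply NI_alpha, Hal. exact H.
Qed.

Lemma B_coef_eq n al k : 0 < al < 1 ->
  B_coef n al (k + n) = - cc al (S k) / Gamma (1 - al).
Proof.
  intros Hal. unfold B_coef.
  replace (INR (k + n) - INR n + 1 + al) with (al + INR (S k)) by (rewrite plus_INR, S_INR; ring).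
  replace (k + n - n + 1)%nat with (S k) by lia.
  rewrite Gamma_add, Gamma_m, Gamma_1p by exact Hal.
  destruct (lim_base_Gamma al) as [Hp _]. lra.
  destruct (lim_base_Gamma (1 - al)) as [Hq _]. lra.
  unfold cc. assert (Hf := INR_fact_neq_0 (S k)).
  field. repeat split; lra.
Qed.

Lemma ibp a b n x d k t : a < b -> (1 <= n)%nat -> Cn_derivs a b n x d -> a < t <= b ->
  INR (S k) * RInt (fun u => (u - a) ^ k * x u) a t = (t - a) ^ S k * x t - Nj a b d (S k) t.
Proof.
  intros Hab Hn Hc Ht.
  assert (Hxe : forall u, a <= u <= b -> x u = xt a b x d u).
  { intros u Hu. assert (H0 := proj1 Hc). rewrite <- H0 by exact Hu. apply (xt_eq a b n x d); auto. }
  assert (Hcx : forall z, continuous (fun u => (u - a) ^ k * xt a b x d u) z).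
  { intros z. apply (continuous_mult (fun u => (u - a) ^ k) (xt a b x d)).
    apply (ex_derive_continuous (fun u => (u - a) ^ k)). auto_derive. auto.
    apply (xt_cont a b n x d); auto. }
  rewrite (RInt_ext _ (fun u => (u - a) ^ k * xt a b x d u)).
  2:{ intros u Hu. rewrite Rmin_left, Rmax_right in Hu by lra. rewrite Hxe by lra. reflexivity. }
  rewrite Hxe by lra.
  assert (HI : is_RInt (fun u => INR (S k) * ((u - a) ^ k * xt a b x d u) + (u - a) ^ S k * yt a b d u) a t
                 (minus ((t - a) ^ S k * xt a b x d t) ((a - a) ^ S k * xt a b x d a))).
  { apply (is_RInt_derive (fun u => (u - a) ^ S k * xt a b x d u)).
    - intros z _. assert (Hl : is_derive (fun u => u - a) z 1) by (auto_derive; auto; ring).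
      eapply is_derive_eq.
      apply (is_derive_mult (fun u => (u - a) ^ S k) (xt a b x d)).
      apply is_derive_pow. exact Hl. apply (xt_derive a b n x d); auto. apply Rmult_comm.
      unfold plus, mult; simpl. fixeq. ring.
    - intros z _. apply (continuous_plus (fun u => INR (S k) * ((u - a) ^ k * xt a b x d u)) (fun u => (u - a) ^ S k * yt a b d u)).
      apply (continuous_mult (fun _ => INR (S k)) (fun u => (u - a) ^ k * xt a b x d u)). apply continuous_const. apply Hcx.
      apply (powyt_cont a b n x d); auto. }
  apply (is_RInt_unique (V:=R_CompleteNormedModule)) in HI.
  rewrite RInt_plus_R in HI.
  2:{ apply exRc. intros z. apply (continuous_mult (fun _ => INR (S k)) (fun u => (u - a) ^ k * xt a b x d u)). apply continuous_const. apply Hcx. }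
  2:{ apply exRc. intros z. apply (powyt_cont a b n x d); auto. }
  rewrite RInt_scal_R in HI by (apply exRc; exact Hcx).
  unfold Nj.
  replace (a - a) with 0 in HI by ring. rewrite pow_i in HI by lia. unfold minus, plus, opp in HI. cbn -[pow INR RInt] in HI. lra.
Qed.

Lemma main_term_eq a b n x d al t k : a < b -> (1 <= n)%nat -> Cn_derivs a b n x d -> 0 < al < 1 -> a < t <= b ->
  main_term a n al x t k = / Gamma (1 - al) * uu a b al d t (S k).
Proof.
  intros Hab Hn Hc Hal Ht. unfold main_term. cbv zeta.
  replace (- Gamma (INR (k + n) - INR n + 1 + al) / (Gamma (- al) * Gamma (1 + al) * INR (fact (k + n - n + 1))))
    with (- B_coef n al (k + n)) by (unfold B_coef, Rdiv; ring).
  rewrite B_coef_eq by exact Hal.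
  unfold V_fun. replace (k + n - n + 1)%nat with (S k) by lia. replace (k + n - n)%nat with k by lia.
  rewrite (ibp a b n x d) by auto.
  replace (INR n - 1 - INR (k + n) - al) with (- al - INR (S k)) by (rewrite plus_INR, S_INR; ring).
  unfold uu. replace (1 - al - INR (S k) - 1) with (- al - INR (S k)) by ring.
  rewrite Rpower_minus_INR by lra.
  destruct (lim_base_Gamma (1 - al)) as [Hq _]. lra.
  assert (HT : (t - a) ^ S k <> 0) by (apply pow_nonzero; lra).
  field. split; lra.
Qed.

Theorem theorem5p3 (a b alpha : R) (n : nat) (x : R -> R) (d : nat -> R -> R) (t : R) :
  a < b -> 0 < alpha < 1 -> (1 <= n)%nat ->
  Cn_derivs a b n x d ->
  a < t <= b ->
  (forall i, (1 <= i <= n - 1)%nat -> ex_series (A_term n alpha i)) /\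
  ex_series (main_term a n alpha x t) /\
  is_RL_deriv a b alpha x t
    (/ Gamma (1 - alpha) * Rpower (t - a) (- alpha) * x t
     + sum_n_m (fun i => A_coef n alpha i * Rpower (t - a) (INR i - alpha) * d i t) 1 (n - 1)
     + Series (main_term a n alpha x t)).
Proof.
  intros Hab Hal Hn Hc Ht.
  split. { intros i Hi. eexists. apply (A_series n alpha i Hal Hi). }
  destruct (yt_bound a b n x d Hab Hn Hc) as [K [HK0 HK]].
  assert (HRp := Rpower_pos (t - a) (1 - alpha)).
  destruct (tail_bound alpha (uu a b alpha d t) (K * Rpower (t - a) (1 - alpha) / (1 - alpha)) Hal) as [Hex _].
  { apply Rdiv_le_0_compat. apply Rmult_le_pos; lra. lra. }
  { intros j. apply (uu_bound a b n x d); auto. lra. }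
  assert (Hm := fun k => main_term_eq a b n x d alpha t k Hab Hn Hc Hal Ht).
  assert (Hex1 : ex_series (fun k => uu a b alpha d t (S k))) by (apply (proj1 (ex_series_incr_1 _)); exact Hex).
  assert (Hexm : ex_series (main_term a n alpha x t)).
  { apply (ex_series_ext (fun k => scal (/ Gamma (1 - alpha)) (uu a b alpha d t (S k)))).
    intros k. rewrite Hm. reflexivity. apply (ex_series_scal_l (K:=R_AbsRing) (V:=R_NormedModule)). exact Hex1. }
  split. exact Hexm.
  exists (x a * Rpower (t - a) (- alpha) + Series (uu a b alpha d t)). split.
  { apply (RL_deriv_main a b n x d); auto. }
  rewrite (sum_n_m_ext_loc _ (fun _ => zero)).
  2:{ intros i Hi. unfold A_coef. rewrite (is_series_unique _ _ (A_series n alpha i Hal ltac:(lia))).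
      unfold zero; simpl. ring. }
  rewrite sum_n_m_const_zero.
  rewrite (Series_ext _ (fun k => / Gamma (1 - alpha) * uu a b alpha d t (S k))) by exact Hm.
  rewrite Series_scal_l.
  rewrite (Series_incr_1 _ Hex).
  assert (Hx : x t = x a + RInt (yt a b d) a t).
  { rewrite <- (proj1 Hc) by lra. apply (xt_eq a b n x d); auto. lra. }
  assert (Hu0 : uu a b alpha d t 0 = Rpower (t - a) (- alpha) * RInt (yt a b d) a t).
  { unfold uu, Nj. rewrite cc_0. replace (1 - alpha - INR 0 - 1) with (- alpha) by (simpl; ring).
    rewrite (RInt_ext _ (yt a b d)). ring. intros z _. simpl. ring. }
  rewrite Hx, Hu0. unfold zero; simpl. ring.
Qed.
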